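(* Fix $a\in(0,\tfrac12)$, $\gamma\in(-\sqrt{2a(1-2a)},0)$ and $\lambda\le-1+a$. Suppose there exist $0\le E_1<E_2<1$ such that the $\Omega$-flow described in the context has corridors $\mathcal K_1(E_1,\lambda)$ and $\mathcal K_1(E_2,\lambda)$ with $w(\mathcal K_1(E_1,\lambda))=0$ and $w(\mathcal K_1(E_2,\lambda))\ge1$. Then there is $E\in(E_1,E_2)$ such that the $\Omega$-flow with parameters $(E,\lambda)$ has a saddles connector.
   Context: For $a\in(0,\tfrac12)$, $\gamma\in(-\sqrt{2a(1-2a)},0)$, $E\in[0,1)$, $\lambda\in\mathbb R$, the $\Omega$-flow is the system on the strip $[-\tfrac\pi2,\tfrac\pi2]\times\mathbb R$ (with $\Omega$ understood mod $2\pi$ on the cylinder) $$\dot\xi=\cos^2\xi,\qquad \dot\Omega=2a\sin\xi\cos\Omega+2\lambda\cos\xi\sin\Omega+2\gamma\sin\xi\cos\xi+\cos^2\xi-2aE.$$ With $\arccos$ the principal branch in $[0,\pi]$, its equilibria are $\tilde S_-=(-\tfrac\pi2,-\pi+\arccos E)$, $N_-=(-\tfrac\pi2,\pi-\arccos E)$, $\tilde S_+=(\tfrac\pi2,-\arccos E)$, $N_+=(\tfrac\pi2,\arccos E)$ and their $2\pi$-translates in $\Omega$. Let $\widetilde{\mathcal W}^-$ be the unique orbit in the open strip with $\alpha$-limit $\tilde S_-$ and $\widetilde{\mathcal W}^+$ the unique orbit with $\omega$-limit $\tilde S_+$. A saddles connector is an orbit with $\alpha$-limit $\tilde S_-$ and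 $\omega$-limit $\tilde S_+$ (i.e. $\widetilde{\mathcal W}^-=\widetilde{\mathcal W}^+$). The flow has a corridor $\mathcal K_1(E,\lambda)$ of winding number $k\in\mathbb Z$ if $\widetilde{\mathcal W}^-\neq\widetilde{\mathcal W}^+$ and the $\omega$-limit of $\widetilde{\mathcal W}^-$ is $(\tfrac\pi2,\arccos E-2\pi k)$. *)

(* Defs.v *)
From Stdlib Require Import Reals ZArith.
From Coquelicot Require Import Coquelicot.
Open Scope R_scope.

Definition xi_field (xi : R) : R := (cos xi) ^ 2.

Definition Om_field (a gam lam E xi Om : R) : R :=
  2 * a * sin xi * cos Om + 2 * lam * cos xi * sin Om
  + 2 * gam * sin xi * cos xi + (cos xi) ^ 2 - 2 * a * E.

(** A (lifted, Omega in R) orbit of the Omega-flow lying in the open strip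
    (-pi/2, pi/2) x R, parametrised by time t in R. *)
Definition is_orbit (a gam lam E : R) (x w : R -> R) : Prop :=
  forall t : R,
    - PI / 2 < x t < PI / 2 /\
    is_derive x t (xi_field (x t)) /\
    is_derive w t (Om_field a gam lam E (x t) (w t)).

Definition alpha_limit (x w : R -> R) (p q : R) : Prop :=
  is_lim x m_infty p /\ is_lim w m_infty q.

Definition omega_limit (x w : R -> R) (p q : R) : Prop :=
  is_lim x p_infty p /\ is_lim w p_infty q.

(** Saddles connector: an orbit with alpha-limit S~_- = (-pi/2, -pi + arccos E)
    and omega-limit S~_+ = (pi/2, -arccos E) on the cylinder, i.e. some
    2pi-translate of it in the lift. *)
Definition saddles_connector (a gam lam E : R) : Prop :=
  exists x w : R -> R,
    is_orbit a gam lam E x w /\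
    alpha_limit x w (- PI / 2) (- PI + acos E) /\
    exists m : Z, omega_limit x w (PI / 2) (- acos E + 2 * PI * IZR m).

(** Corridor K_1(E, lambda) of winding number k: W~^- <> W~^+ (no saddles
    connector) and the orbit W~^- (alpha-limit S~_-, lifted so that its
    Omega tends to -pi + arccos E) has omega-limit (pi/2, arccos E - 2 pi k). *)
Definition corridor (a gam lam E : R) (k : Z) : Prop :=
  ~ saddles_connector a gam lam E /\
  exists x w : R -> R,
    is_orbit a gam lam E x w /\
    alpha_limit x w (- PI / 2) (- PI + acos E) /\
    omega_limit x w (PI / 2) (acos E - 2 * PI * IZR k).

(* Main.v *)
Require Import Defs.
From Stdlib Require Import Reals ZArith Lra Lia Classical.
From Coquelicot Require Import Coquelicot.
Open Scope R_scope.


Lemma der_minus (f g : R -> R) x df dg : is_derive f x df -> is_derive g x dg -> is_derive (fun x => f x - g x) x (df - dg).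
Proof. intros; apply is_derive_Reals; apply derivable_pt_lim_minus; apply is_derive_Reals; auto. Qed.
Lemma der_plus (f g : R -> R) x df dg : is_derive f x df -> is_derive g x dg -> is_derive (fun x => f x + g x) x (df + dg).
Proof. intros; apply is_derive_Reals; apply derivable_pt_lim_plus; apply is_derive_Reals; auto. Qed.
Lemma der_mult (f g : R -> R) x df dg : is_derive f x df -> is_derive g x dg -> is_derive (fun x => f x * g x) x (df * g x + f x * dg).
Proof. intros; apply is_derive_Reals; apply derivable_pt_lim_mult; apply is_derive_Reals; auto. Qed.
Lemma der_opp (f : R -> R) x df : is_derive f x df -> is_derive (fun x => - f x) x (- df).
Proof. intros; apply is_derive_Reals; apply derivable_pt_lim_opp; apply is_derive_Reals; auto. Qed.
Lemma der_const (c x : R) : is_derive (fun _ => c) x 0.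
Proof. apply is_derive_Reals; apply derivable_pt_lim_const. Qed.
Lemma der_id (x : R) : is_derive (fun x => x) x 1.
Proof. apply is_derive_Reals; apply derivable_pt_lim_id. Qed.
Lemma der_ext (f g : R -> R) (x : R) (l l' : R) : (forall t, f t = g t) -> l = l' -> is_derive f x l -> is_derive g x l'.
Proof. intros H -> Hd; eapply is_derive_ext; eauto. Qed.
Lemma der_expK (K x : R) : is_derive (fun x => exp (K * x)) x (K * exp (K * x)).
Proof. auto_derive; [exact I| ring]. Qed.

Lemma cont_eps (f : R -> R) x : continuity_pt f x ->
  forall eps, 0 < eps -> exists d, 0 < d /\ forall y, Rabs (y - x) < d -> Rabs (f y - f x) < eps.
Proof.
  intros H eps He. destruct (H eps He) as [d [Hd Hy]]. exists d; split; auto.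
  intros y Hyx. destruct (Req_dec y x) as [->|Hne].
  - rewrite Rminus_eq_0, Rabs_R0; lra.
  - apply (Hy y). split; [split; [exact I| auto] | exact Hyx].
Qed.

Lemma deriv_cont f x l : is_derive f x l -> continuity_pt f x.
Proof.
  intros H. apply is_derive_Reals in H.
  apply derivable_continuous_pt. exists l. exact H.
Qed.

Lemma mono_deriv (f df : R -> R) a b :
  (forall x, is_derive f x (df x)) -> a <= b ->
  (forall x, a <= x <= b -> 0 <= df x) -> f a <= f b.
Proof.
  intros Hd Hab Hs.
  destruct (MVT_gen f a b df) as [c [Hc Heq]].
  - intros; apply Hd.
  - intros; eapply deriv_cont; apply Hd.
  - rewrite Rmin_left in Hc by lra. rewrite Rmax_right in Hc by lra.
    assert (0 <= df c * (b - a)) by (apply Rmult_le_pos; [apply Hs; lra| lra]). lra.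
Qed.

Lemma cmp_lemma (g dg H dH : R -> R) a b :
  (forall x, is_derive g x (dg x)) -> (forall x, is_derive H x (dH x)) -> a <= b ->
  (forall x, a <= x <= b -> Rabs (dg x) <= dH x) -> Rabs (g b - g a) <= H b - H a.
Proof.
  intros Hg HH Hab Hs.
  assert (H1 : (fun x => H x - g x) a <= (fun x => H x - g x) b).
  { apply (mono_deriv (fun x => H x - g x) (fun x => dH x - dg x)); auto.
    - intros x. apply der_minus; auto.
    - intros x Hx. specialize (Hs x Hx). apply Rabs_le_between in Hs. lra. }
  assert (H2 : (fun x => H x + g x) a <= (fun x => H x + g x) b).
  { apply (mono_deriv (fun x => H x + g x) (fun x => dH x + dg x)); auto.
    - intros x. apply der_plus; auto.
    - intros x Hx. specialize (Hs x Hx). apply Rabs_le_between in Hs. lra. }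
  simpl in *. apply Rabs_le_between. lra.
Qed.

Lemma gronwall (h dh : R -> R) K s t :
  (forall x, is_derive h x (dh x)) -> s <= t ->
  (forall u, s <= u <= t -> dh u <= K * h u) -> h t <= exp (K * (t - s)) * h s.
Proof.
  intros Hd Hst Hs.
  assert (M : (fun x => - (exp (- K * x) * h x)) s <= (fun x => - (exp (- K * x) * h x)) t).
  { apply (mono_deriv (fun x => - (exp (- K * x) * h x)) (fun x => - (- K * exp (-K * x) * h x + exp (- K * x) * dh x))); auto.
    - intros x. apply der_opp.
      apply (der_mult (fun x => exp (- K * x)) h x (- K * exp (-K * x)) (dh x)); [ | auto].
      apply (der_ext (fun x => exp ((-K) * x)) _ x ((-K) * exp ((-K) * x))); [intros; reflexivity| ring| apply der_expK].
    - intros u Hu. specialize (Hs u Hu). pose proof (exp_pos (-K*u)).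
      assert (0 <= exp (-K*u) * (K * h u - dh u)) by (apply Rmult_le_pos; lra). nra. }
  simpl in M.
  assert (E1 : exp (K * (t - s)) = exp (K * t) * exp (- K * s)).
  { rewrite <- exp_plus. f_equal; ring. }
  assert (exp (- K * t) * h t <= exp (- K * s) * h s) by lra.
  pose proof (exp_pos (K*t)).
  assert (HE : exp (K * t) * exp (-K * t) = 1) by (rewrite <- exp_plus; replace (K*t + -K*t) with 0 by ring; apply exp_0).
  rewrite E1.
  apply Rmult_le_compat_l with (r := exp (K*t)) in H; [|lra].
  replace (h t) with (exp (K * t) * (exp (- K * t) * h t)) by (rewrite <- Rmult_assoc, HE; ring).
  rewrite Rmult_assoc. exact H.
Qed.

Lemma barrier (y dy : R -> R) t1 t2 th :
  (forall x, is_derive y x (dy x)) -> t1 <= t2 -> y t1 <= th ->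
  (forall u, t1 <= u <= t2 -> y u = th -> dy u < 0) -> y t2 <= th.
Proof.
  intros Hd H12 H1 Hc.
  destruct (Rle_or_lt (y t2) th) as [|Hgt]; [auto|exfalso].
  set (A := fun u => t1 <= u <= t2 /\ y u <= th).
  assert (Hb : bound A) by (exists t2; intros u [Hu _]; lra).
  assert (Hne : exists x, A x) by (exists t1; split; [lra| auto]).
  destruct (completeness A Hb Hne) as [s [Hub Hlub]].
  assert (Hs1 : t1 <= s) by (apply Hub; split; [lra|auto]).
  assert (Hs2 : s <= t2) by (apply Hlub; intros u [Hu _]; lra).
  assert (Hright : forall u, s < u <= t2 -> th < y u).
  { intros u Hu. destruct (Rle_or_lt (y u) th) as [Hl|Hl]; auto.
    assert (u <= s) by (apply Hub; split; [lra|auto]). lra. }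
  assert (Hys : y s <= th).
  { destruct (Rle_or_lt (y s) th) as [|Hl]; auto. exfalso.
    destruct (cont_eps y s (deriv_cont _ _ _ (Hd s)) (y s - th)) as [d [Hd0 Hdd]]; [lra|].
    assert (Hlt : s - d < s) by lra.
    destruct (Rle_or_lt s t1) as [Hst|Hst].
    - assert (s = t1) by lra. subst s. lra.
    -
      destruct (classic (exists u, A u /\ Rmax t1 (s - d) < u)) as [[u [[Hu1 Hu2] Hu3]]|Hno].
      + assert (u <= s) by (apply Hub; split; auto).
        assert (Rabs (u - s) < d).
        { apply Rabs_lt_between. pose proof (Rmax_r t1 (s-d)). lra. }
        specialize (Hdd u H0). apply Rabs_lt_between in Hdd. lra.
      + assert (s <= Rmax t1 (s - d)).
        { apply Hlub. intros u Hu. destruct (Rle_or_lt u (Rmax t1 (s - d))); auto.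
          exfalso; apply Hno; exists u; auto. }
        unfold Rmax in H. destruct (Rle_dec t1 (s - d)); lra. }
  assert (Hst2 : s < t2) by (destruct (Req_dec s t2); [subst; lra| lra]).
  assert (Heq : y s = th).
  { destruct (Req_dec (y s) th) as [|Hne']; auto. exfalso.
    destruct (cont_eps y s (deriv_cont _ _ _ (Hd s)) (th - y s)) as [d [Hd0 Hdd]]; [lra|].
    set (u := s + Rmin (d/2) (t2 - s)).
    assert (0 < Rmin (d/2) (t2 - s)) by (apply Rmin_glb_lt; lra).
    assert (Rmin (d/2) (t2 - s) <= t2 - s) by apply Rmin_r.
    assert (Rmin (d/2) (t2 - s) <= d/2) by apply Rmin_l.
    assert (Rabs (u - s) < d) by (unfold u; rewrite Rabs_right; lra).
    specialize (Hdd u H3). apply Rabs_lt_between in Hdd.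
    specialize (Hright u ltac:(unfold u; lra)). lra. }
  pose proof (Hc s ltac:(lra) Heq) as Hneg.
  pose proof (Hd s) as Hds. apply is_derive_Reals in Hds.
  destruct (Hds (- dy s) ltac:(lra)) as [d Hdd].
  set (h := Rmin (d/2) (t2 - s)).
  assert (0 < h) by (apply Rmin_glb_lt; [destruct d; simpl; lra| lra]).
  assert (h <= t2 - s) by apply Rmin_r.
  assert (h <= d/2) by apply Rmin_l.
  assert (Rabs h < d) by (rewrite Rabs_right; [destruct d; simpl in *; lra| lra]).
  specialize (Hdd h ltac:(lra) H3). apply Rabs_lt_between in Hdd.
  specialize (Hright (s + h) ltac:(lra)).
  assert (Hq : (y (s + h) - y s) / h < 0) by lra.
  assert (y (s + h) - y s < 0).
  { apply (Rmult_lt_compat_r h) in Hq; [|lra]. field_simplify in Hq; lra. }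
  lra.
Qed.

Lemma barrier_ge (y dy : R -> R) t1 t2 th :
  (forall x, is_derive y x (dy x)) -> t1 <= t2 -> th <= y t1 ->
  (forall u, t1 <= u <= t2 -> y u = th -> 0 < dy u) -> th <= y t2.
Proof.
  intros Hd H12 H1 Hc.
  assert (- y t2 <= - th).
  { apply (barrier (fun x => - y x) (fun x => - dy x) t1 t2); auto.
    - intros x; apply der_opp; auto.
    - lra.
    - intros u Hu Heq. assert (y u = th) by lra. specialize (Hc u Hu H). lra. }
  lra.
Qed.

Lemma exp_le_mono x y : x <= y -> exp x <= exp y.
Proof. intros [H|H]; [left; apply exp_increasing; auto| subst; lra]. Qed.

Lemma exp_ge1 x : 0 <= x -> 1 <= exp x.
Proof. intros H. rewrite <- exp_0. apply exp_le_mono; auto. Qed.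

Lemma expbound (g dg : R -> R) L C t0 : 0 < L ->
  (forall x, is_derive g x (dg x)) -> g t0 = 0 ->
  (forall s, Rabs (dg s) <= L * C * exp (2 * L * Rabs (s - t0))) ->
  forall t, Rabs (g t) <= C / 2 * exp (2 * L * Rabs (t - t0)).
Proof.
  intros HL Hd H0 Hb t.
  assert (HC : 0 <= C).
  { specialize (Hb t0). rewrite Rminus_eq_0, Rabs_R0, Rmult_0_r, exp_0, Rmult_1_r in Hb.
    pose proof (Rabs_pos (dg t0)). assert (0 <= L * C) by lra.
    destruct (Rle_or_lt 0 C); auto; nra. }
  destruct (Rle_or_lt t0 t) as [Ht|Ht].
  - pose proof (cmp_lemma g dg (fun s => C / 2 * exp (2 * L * (s - t0)))
       (fun s => L * C * exp (2 * L * (s - t0))) t0 t Hd) as K.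
    assert (Hx : forall x, is_derive (fun s => C / 2 * exp (2 * L * (s - t0))) x (L * C * exp (2 * L * (x - t0)))).
    { intros x. auto_derive; [exact I| unfold Rminus; field]. }
    specialize (K Hx Ht).
    assert (K2 : forall x, t0 <= x <= t -> Rabs (dg x) <= L * C * exp (2 * L * (x - t0))).
    { intros x Hx'. rewrite <- (Rabs_right (x - t0)) by lra. apply Hb. }
    specialize (K K2). rewrite H0, Rminus_0_r in K.
    rewrite Rabs_right with (r := t - t0) by lra.
    pose proof (exp_pos (2 * L * (t0 - t0))). assert (0 <= C/2 * exp (2 * L * (t0 - t0))) by (apply Rmult_le_pos; lra).
    lra.
  - pose proof (cmp_lemma g dg (fun s => - (C / 2 * exp (2 * L * (t0 - s))))
       (fun s => L * C * exp (2 * L * (t0 - s))) t t0 Hd) as K.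
    assert (Hx : forall x, is_derive (fun s => - (C / 2 * exp (2 * L * (t0 - s)))) x (L * C * exp (2 * L * (t0 - x)))).
    { intros x. auto_derive; [exact I| unfold Rminus; field]. }
    specialize (K Hx ltac:(lra)).
    assert (K2 : forall x, t <= x <= t0 -> Rabs (dg x) <= L * C * exp (2 * L * (t0 - x))).
    { intros x Hx'. replace (t0 - x) with (Rabs (x - t0)) by (rewrite Rabs_left1; lra). apply Hb. }
    specialize (K K2). rewrite H0, Rminus_0_l, Rabs_Ropp in K.
    replace (Rabs (t - t0)) with (t0 - t) by (rewrite Rabs_left; lra).
    pose proof (exp_pos (2 * L * (t0 - t0))). assert (0 <= C/2 * exp (2 * L * (t0 - t0))) by (apply Rmult_le_pos; lra).
    lra.
Qed.

Section Picard.
Variable f : R -> R -> R.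
Variables L M t0 y0 : R.
Hypothesis HL : 0 < L.
Hypothesis Hlip : forall t y z, Rabs (f t y - f t z) <= L * Rabs (y - z).
Hypothesis Hbd : forall t y, Rabs (f t y) <= M.
Hypothesis Hcont : forall phi : R -> R, (forall t, continuous phi t) ->
  forall t, continuous (fun s => f s (phi s)) t.

Fixpoint it (k : nat) : R -> R :=
  match k with
  | O => fun _ => y0
  | S k => fun t => y0 + RInt (fun s => f s (it k s)) t0 t
  end.

Lemma it_props k : (forall t, continuous (it k) t) /\ (forall t, is_derive (it (S k)) t (f t (it k t))).
Proof.
  induction k as [|k [IH1 IH2]].
  - assert (C0 : forall t, continuous (it 0) t) by (intros t; apply continuous_const).
    split; auto.
    intros t. simpl.
    apply (der_ext (fun t => y0 + RInt (fun s => f s y0) t0 t) _ t (0 + f t y0)); [reflexivity| ring|].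
    apply der_plus; [apply der_const|].
    apply is_derive_RInt with (f := fun s => f s y0) (a := t0).
    + apply filter_forall. intros b. apply (RInt_correct (V := R_CompleteNormedModule) (fun s => f s y0) t0 b). apply (ex_RInt_continuous (V := R_CompleteNormedModule)).
      intros z _. apply (Hcont (fun _ => y0)). auto.
    + apply (Hcont (fun _ => y0)). auto.
  - assert (C1 : forall t, continuous (it (S k)) t).
    { intros t. apply (ex_derive_continuous (K := R_AbsRing) (V := R_NormedModule)). eexists; apply IH2. }
    split; auto.
    intros t. change (is_derive (fun t => y0 + RInt (fun s => f s (it (S k) s)) t0 t) t (f t (it (S k) t))).
    apply (der_ext (fun t => y0 + RInt (fun s => f s (it (S k) s)) t0 t) _ t (0 + f t (it (S k) t))); [reflexivity| ring|].
    apply der_plus; [apply der_const|].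
    apply is_derive_RInt with (f := fun s => f s (it (S k) s)) (a := t0).
    + apply filter_forall. intros b. apply (RInt_correct (V := R_CompleteNormedModule) (fun s => f s (it (S k) s)) t0 b). apply (ex_RInt_continuous (V := R_CompleteNormedModule)).
      intros z _. apply Hcont; auto.
    + apply Hcont; auto.
Qed.

Definition Dc := M / L.
Definition ee (t : R) := exp (2 * L * Rabs (t - t0)).

Lemma it_t0 k : it k t0 = y0.
Proof. destruct k; simpl; auto. rewrite RInt_point. unfold zero; simpl; ring. Qed.

Lemma it_step k t : Rabs (it (S k) t - it k t) <= Dc * (/2)^k * ee t.
Proof.
  assert (HM : 0 <= M) by (pose proof (Hbd 0 0); pose proof (Rabs_pos (f 0 0)); lra).
  revert t; induction k as [|k IH]; intros t.
  - simpl pow. rewrite Rmult_1_r.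
    pose proof (expbound (fun t => it 1 t - it 0 t) (fun s => f s y0 - 0) L (2 * Dc) t0 HL) as K.
    replace (Dc * ee t) with (2 * Dc / 2 * exp (2 * L * Rabs (t - t0))) by (unfold ee; field).
    apply K.
    + intros x. apply der_minus; [apply (proj2 (it_props 0))| apply der_const].
    + rewrite !it_t0; ring.
    + intros s. rewrite Rminus_0_r. unfold Dc.
      replace (L * (2 * (M / L))) with (2 * M) by (field; lra).
      pose proof (exp_ge1 (2 * L * Rabs (s - t0))) as E.
      assert (0 <= 2 * L * Rabs (s - t0)) by (pose proof (Rabs_pos (s - t0)); nra).
      specialize (E H). specialize (Hbd s y0). nra.
  - pose proof (expbound (fun t => it (S (S k)) t - it (S k) t)
      (fun s => f s (it (S k) s) - f s (it k s)) L (Dc * (/2)^k) t0 HL) as K.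
    replace (Dc * (/2) ^ S k * ee t) with (Dc * (/2)^k / 2 * exp (2 * L * Rabs (t - t0))) by (unfold ee; simpl; field).
    apply K.
    + intros x. apply der_minus; [apply (proj2 (it_props (S k)))| apply (proj2 (it_props k))].
    + rewrite !it_t0; ring.
    + intros s. eapply Rle_trans; [apply Hlip|].
      rewrite Rmult_assoc. apply Rmult_le_compat_l; [lra|]. apply IH.
Qed.

Lemma it_tele m p t : Rabs (it (m + p) t - it m t) <= 2 * Dc * ee t * ((/2)^m - (/2)^(m+p)).
Proof.
  induction p as [|p IH].
  - rewrite Nat.add_0_r, Rminus_eq_0, Rabs_R0. lra.
  - replace (m + S p)%nat with (S (m + p)) by lia.
    pose proof (it_step (m + p) t).
    replace (it (S (m + p)) t - it m t) with ((it (S (m + p)) t - it (m+p) t) + (it (m + p) t - it m t)) by ring.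
    eapply Rle_trans; [apply Rabs_triang|].
    simpl pow.  lra.
Qed.

Lemma Dc_ee_pos t : 0 <= Dc * ee t.
Proof.
  assert (HM : 0 <= M) by (pose proof (Hbd 0 0); pose proof (Rabs_pos (f 0 0)); lra).
  unfold Dc, ee. apply Rmult_le_pos; [apply Rmult_le_pos; [lra| left; apply Rinv_0_lt_compat; lra]| left; apply exp_pos].
Qed.

Lemma it_cauchy_bd m n t : (m <= n)%nat -> Rabs (it n t - it m t) <= 2 * Dc * ee t * (/2)^m.
Proof.
  intros Hmn. replace n with (m + (n - m))%nat by lia.
  eapply Rle_trans; [apply it_tele|].
  pose proof (Dc_ee_pos t). pose proof (pow_le (/2) (m + (n - m)) ltac:(lra)). nra.
Qed.

Lemma half_small eps : 0 < eps -> exists N, forall n, (n >= N)%nat -> (/2)^n < eps.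
Proof.
  intros He. destruct (pow_lt_1_zero (/2) ltac:(rewrite Rabs_right; lra) eps He) as [N HN].
  exists N. intros n Hn. specialize (HN n Hn). rewrite Rabs_right in HN; auto.
  apply Rle_ge, pow_le; lra.
Qed.

Lemma it_cauchy t : Cauchy_crit (fun k => it k t).
Proof.
  intros eps He.
  pose proof (Dc_ee_pos t) as HP.
  destruct (half_small (eps / (2 * Dc * ee t + 1))) as [N HN].
  { apply Rdiv_lt_0_compat; lra. }
  exists N. intros n m Hn Hm. unfold Rdist.
  assert (Hgen : forall n m, (n >= N)%nat -> (m >= N)%nat -> (m <= n)%nat -> Rabs (it n t - it m t) < eps).
  { intros n' m' Hn' Hm' Hle. eapply Rle_lt_trans; [apply it_cauchy_bd; auto|].
    specialize (HN m' Hm').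
    apply (Rmult_lt_compat_l (2 * Dc * ee t + 1)) in HN; [|lra].
    replace ((2 * Dc * ee t + 1) * (eps / (2 * Dc * ee t + 1))) with eps in HN by (field; lra).
    pose proof (pow_le (/2) m' ltac:(lra)). nra. }
  destruct (Compare_dec.le_lt_dec m n).
  - apply Hgen; auto.
  - rewrite <- Rabs_Ropp. replace (- (it n t - it m t)) with (it m t - it n t) by ring. apply Hgen; auto; lia.
Qed.

Definition ysol (t : R) : R := proj1_sig (Rcomplete.R_complete _ (it_cauchy t)).

Lemma ysol_cv t : Un_cv (fun k => it k t) (ysol t).
Proof. unfold ysol. destruct (Rcomplete.R_complete _ (it_cauchy t)); auto. Qed.

Lemma cv_bound (u : nat -> R) l a B m : Un_cv u l -> (forall n, (n >= m)%nat -> Rabs (u n - a) <= B) -> Rabs (l - a) <= B.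
Proof.
  intros Hc Hb. destruct (Rle_or_lt (Rabs (l - a)) B) as [|Hlt]; auto. exfalso.
  destruct (Hc (Rabs (l - a) - B) ltac:(lra)) as [N HN].
  specialize (HN (max N m) ltac:(lia)). specialize (Hb (max N m) ltac:(lia)).
  unfold Rdist in HN.
  pose proof (Rabs_triang (u (max N m) - a) (l - u (max N m))).
  replace (u (max N m) - a + (l - u (max N m))) with (l - a) in H by ring.
  rewrite <- Rabs_Ropp in HN. replace (- (u (max N m) - l)) with (l - u (max N m)) in HN by ring. lra.
Qed.

Lemma ysol_bd m t : Rabs (ysol t - it m t) <= 2 * Dc * ee t * (/2)^m.
Proof.
  apply (cv_bound (fun k => it k t) _ _ _ m (ysol_cv t)).
  intros n Hn. apply it_cauchy_bd; lia.
Qed.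

Lemma ysol_t0 : ysol t0 = y0.
Proof.
  apply (UL_sequence (fun k => it k t0)); [apply ysol_cv|].
  intros eps He. exists O. intros n _. rewrite it_t0. unfold Rdist. rewrite Rminus_eq_0, Rabs_R0; auto.
Qed.

Lemma ysol_deriv t : is_derive ysol t (f t (ysol t)).
Proof.
  apply is_derive_Reals.
  set (d := mkposreal 1 Rlt_0_1).
  apply (CVU_derivable (fun n => it (S n)) (fun n s => f s (it n s)) ysol (fun s => f s (ysol s)) t d).
  - intros eps He.
    set (B := 2 * Dc * exp (2 * L * (Rabs (t - t0) + 1))).
    assert (HB : 0 <= B).
    { unfold B. pose proof (Dc_ee_pos t0). unfold ee in H. rewrite Rminus_eq_0, Rabs_R0, Rmult_0_r, exp_0 in H.
      pose proof (exp_pos (2 * L * (Rabs (t - t0) + 1))). nra. }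
    destruct (half_small (eps / (L * B + 1))) as [N HN]; [apply Rdiv_lt_0_compat; nra|].
    exists N. intros n y Hn Hy. unfold Boule in Hy. simpl in Hy.
    eapply Rle_lt_trans; [apply Hlip|].
    eapply Rle_lt_trans; [apply Rmult_le_compat_l; [lra| apply ysol_bd]|].
    assert (Hee : ee y <= exp (2 * L * (Rabs (t - t0) + 1))).
    { unfold ee. apply exp_le_mono. apply Rmult_le_compat_l; [lra|].
      replace (y - t0) with ((y - t) + (t - t0)) by ring.
      eapply Rle_trans; [apply Rabs_triang|]. lra. }
    assert (HD : 0 <= Dc) by (unfold Dc; pose proof (Hbd 0 0); pose proof (Rabs_pos (f 0 0)); apply Rmult_le_pos; [lra| left; apply Rinv_0_lt_compat; lra]).
    specialize (HN n Hn).
    apply (Rmult_lt_compat_l (L * B + 1)) in HN; [|nra].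
    replace ((L * B + 1) * (eps / (L * B + 1))) with eps in HN by (field; nra).
    pose proof (pow_le (/2) n ltac:(lra)).
    assert (HBy : 2 * Dc * ee y <= B) by (unfold B; nra).
    set (p := (/2)^n) in *.
    assert (L * (2 * Dc * ee y * p) <= L * (B * p)).
    { apply Rmult_le_compat_l; [lra|]. apply Rmult_le_compat_r; lra. }
    nra.
  - intros x _. intros eps He. destruct (CV_shift' (fun k => it k x) 1 _ (ysol_cv x) eps He) as [N HN].
    exists N. intros n Hn. specialize (HN n Hn). simpl in HN. replace (S n) with (n + 1)%nat by lia. exact HN.
  - intros n x _. apply is_derive_Reals. apply (proj2 (it_props n)).
  - unfold Boule; simpl. rewrite Rminus_eq_0, Rabs_R0; lra.
Qed.

End Picard.

Lemma picard (f : R -> R -> R) (L M : R) :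
  0 < L ->
  (forall t y z, Rabs (f t y - f t z) <= L * Rabs (y - z)) ->
  (forall t y, Rabs (f t y) <= M) ->
  (forall phi : R -> R, (forall t, continuous phi t) -> forall t, continuous (fun s => f s (phi s)) t) ->
  forall t0 y0, exists y, y t0 = y0 /\ forall t, is_derive y t (f t (y t)).
Proof.
  intros HL Hlip Hbd Hc t0 y0.
  exists (ysol f L M t0 y0 HL Hlip Hbd Hc). split.
  - apply ysol_t0.
  - intros t. apply ysol_deriv.
Qed.

Definition Ct t := cos (atan t).
Definition St t := sin (atan t).

Lemma Ct_pos t : 0 < Ct t.
Proof. unfold Ct. pose proof (atan_bound t). apply cos_gt_0; lra. Qed.
Lemma Ct_le1 t : Ct t <= 1.
Proof. unfold Ct. apply COS_bound. Qed.
Lemma St_bnd t : -1 <= St t <= 1.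
Proof. unfold St. apply SIN_bound. Qed.
Lemma SC_sq t : St t * St t + Ct t * Ct t = 1.
Proof. unfold St, Ct. pose proof (sin2_cos2 (atan t)). unfold Rsqr in H. lra. Qed.

Lemma sqrt1t_pos t : 0 < sqrt (1 + t²).
Proof. apply sqrt_lt_R0. pose proof (Rle_0_sqr t). lra. Qed.

Lemma St_sign_pos t : 0 <= t -> 0 <= St t.
Proof. intros H. unfold St. rewrite sin_atan. pose proof (sqrt1t_pos t).
  apply Rmult_le_pos; [lra| left; apply Rinv_0_lt_compat; lra]. Qed.
Lemma St_sign_neg t : t <= 0 -> St t <= 0.
Proof. intros H. unfold St. rewrite sin_atan. pose proof (sqrt1t_pos t).
  assert (0 < / sqrt (1 + t²)) by (apply Rinv_0_lt_compat; lra). unfold Rdiv. nra. Qed.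

Lemma St_pos_bound t : 0 <= t -> 1 - Ct t <= St t <= 1.
Proof. intros H. pose proof (St_sign_pos t H). pose proof (SC_sq t). pose proof (Ct_pos t).
  pose proof (Ct_le1 t). pose proof (St_bnd t). split; nra. Qed.
Lemma St_neg_bound t : t <= 0 -> -1 <= St t <= Ct t - 1.
Proof. intros H. pose proof (St_sign_neg t H). pose proof (SC_sq t). pose proof (Ct_pos t).
  pose proof (Ct_le1 t). pose proof (St_bnd t). split; nra. Qed.

Lemma Ct_small eps t : 0 < eps -> / eps <= Rabs t -> Ct t <= eps.
Proof.
  intros He Ht. unfold Ct. rewrite cos_atan.
  assert (Hs : Rabs t <= sqrt (1 + t²)).
  { rewrite <- sqrt_Rsqr_abs. apply sqrt_le_1_alt. pose proof (Rle_0_sqr t). lra. }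
  pose proof (sqrt1t_pos t).
  assert (/ eps <= sqrt (1 + t²)) by lra.
  unfold Rdiv. rewrite Rmult_1_l.
  rewrite <- (Rinv_inv eps). apply Rinv_le_contravar; auto. apply Rinv_0_lt_compat; auto.
Qed.

Lemma prod_bound u v A : Rabs u <= A -> Rabs v <= 1 -> Rabs (u * v) <= A.
Proof. intros H1 H2. rewrite Rabs_mult. pose proof (Rabs_pos u). pose proof (Rabs_pos v). nra. Qed.

Section Field.
Variables a gam lam : R.
Hypothesis Ha : 0 < a.

Definition Fe (E t y : R) : R := 2 * a * St t * cos y + 2 * lam * Ct t * sin y
  + 2 * gam * St t * Ct t + Ct t ^ 2 - 2 * a * E.

Lemma Fe_Om E t y : Fe E t y = Om_field a gam lam E (atan t) y.
Proof. reflexivity. Qed.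

Definition Lc := 2 * a + 2 * Rabs lam + 1.
Definition K0 := 2 * a + 2 * Rabs lam + 2 * Rabs gam + 1.

Lemma Lc_pos : 0 < Lc.
Proof. unfold Lc. pose proof (Rabs_pos lam). lra. Qed.
Lemma K0_pos : 0 < K0.
Proof. unfold K0. pose proof (Rabs_pos lam). pose proof (Rabs_pos gam). lra. Qed.

Definition dFe (t y : R) := - 2 * a * St t * sin y + 2 * lam * Ct t * cos y.

Lemma Fe_dy E t y : is_derive (Fe E t) y (dFe t y).
Proof. unfold Fe, dFe. auto_derive; [exact I| ring]. Qed.

Lemma Fe_mvt E t y z : exists c, Rmin y z <= c <= Rmax y z /\ Fe E t y - Fe E t z = dFe t c * (y - z).
Proof.
  destruct (MVT_gen (Fe E t) z y (dFe t)) as [c [Hc Heq]].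
  - intros; apply Fe_dy.
  - intros; eapply deriv_cont; apply Fe_dy.
  - exists c. split; [| exact Heq]. rewrite Rmin_comm, Rmax_comm. exact Hc.
Qed.

Lemma dFe_bound t y : Rabs (dFe t y) <= 2 * a + 2 * Rabs lam.
Proof.
  unfold dFe. eapply Rle_trans; [apply Rabs_triang|].
  assert (Rabs (-2 * a * St t * sin y) <= 2 * a).
  { replace (-2 * a * St t * sin y) with ((-2 * a) * (St t * sin y)) by ring. rewrite Rabs_mult.
    rewrite Rabs_left by lra. pose proof (St_bnd t). pose proof (SIN_bound y).
    assert (Rabs (St t * sin y) <= 1) by (apply prod_bound; apply Rabs_le; lra). pose proof (Rabs_pos (St t * sin y)). nra. }
  assert (Rabs (2 * lam * Ct t * cos y) <= 2 * Rabs lam).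
  { replace (2 * lam * Ct t * cos y) with ((2 * lam) * (Ct t * cos y)) by ring.
    rewrite Rabs_mult, (Rabs_mult 2 _), (Rabs_right 2) by lra. pose proof (Ct_pos t). pose proof (Ct_le1 t). pose proof (COS_bound y).
    assert (Rabs (Ct t * cos y) <= 1) by (apply prod_bound; apply Rabs_le; lra).
    pose proof (Rabs_pos lam). nra. }
  lra.
Qed.

Lemma Fe_lip E t y z : Rabs (Fe E t y - Fe E t z) <= Lc * Rabs (y - z).
Proof.
  destruct (Fe_mvt E t y z) as [c [_ ->]]. rewrite Rabs_mult.
  pose proof (dFe_bound t c). pose proof (Rabs_pos (y - z)). unfold Lc. nra.
Qed.

Lemma Fe_E E E' t y : Fe E t y - Fe E' t y = 2 * a * (E' - E).
Proof. unfold Fe. ring. Qed.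

Definition Mb E := 2 * a + 2 * Rabs lam + 2 * Rabs gam + 1 + 2 * a * Rabs E.

Lemma Fe_bound E t y : Rabs (Fe E t y) <= Mb E.
Proof.
  unfold Fe, Mb.
  pose proof (St_bnd t). pose proof (Ct_pos t). pose proof (Ct_le1 t).
  pose proof (SIN_bound y). pose proof (COS_bound y).
  assert (A1 : Rabs (2 * a * St t * cos y) <= 2 * a).
  { replace (2 * a * St t * cos y) with ((2 * a) * (St t * cos y)) by ring. rewrite Rabs_mult, Rabs_right by lra.
    assert (Rabs (St t * cos y) <= 1) by (apply prod_bound; apply Rabs_le; lra). nra. }
  assert (A2 : Rabs (2 * lam * Ct t * sin y) <= 2 * Rabs lam).
  { replace (2 * lam * Ct t * sin y) with ((2 * lam) * (Ct t * sin y)) by ring.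
    rewrite Rabs_mult, (Rabs_mult 2 _), (Rabs_right 2) by lra.
    assert (Rabs (Ct t * sin y) <= 1) by (apply prod_bound; apply Rabs_le; lra). pose proof (Rabs_pos lam). nra. }
  assert (A3 : Rabs (2 * gam * St t * Ct t) <= 2 * Rabs gam).
  { replace (2 * gam * St t * Ct t) with ((2 * gam) * (St t * Ct t)) by ring.
    rewrite Rabs_mult, (Rabs_mult 2 _), (Rabs_right 2) by lra.
    assert (Rabs (St t * Ct t) <= 1) by (apply prod_bound; apply Rabs_le; lra). pose proof (Rabs_pos gam). nra. }
  assert (A4 : Rabs (Ct t ^ 2) <= 1) by (rewrite Rabs_right; nra).
  assert (A5 : Rabs (2 * a * E) <= 2 * a * Rabs E) by (rewrite Rabs_mult, Rabs_right; lra).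
  set (u1 := 2 * a * St t * cos y) in *. set (u2 := 2 * lam * Ct t * sin y) in *.
  set (u3 := 2 * gam * St t * Ct t) in *. set (u4 := Ct t ^ 2) in *. set (u5 := 2 * a * E) in *.
  pose proof (Rabs_triang (u1 + u2 + u3 + u4) (- u5)).
  pose proof (Rabs_triang (u1 + u2 + u3) u4).
  pose proof (Rabs_triang (u1 + u2) u3).
  pose proof (Rabs_triang u1 u2). rewrite Rabs_Ropp in H4.
  unfold Rminus. lra.
Qed.

Lemma cpt_to_cont f x : continuity_pt f x -> continuous f x.
Proof. intros H. apply continuity_pt_filterlim in H. exact H. Qed.
Lemma cont_to_cpt f x : continuous f x -> continuity_pt f x.
Proof. intros H. apply continuity_pt_filterlim. exact H. Qed.

Lemma cpt_plus (f g : R -> R) x : continuity_pt f x -> continuity_pt g x -> continuity_pt (fun s => f s + g s) x.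
Proof. intros; apply (continuity_pt_plus f g); auto. Qed.
Lemma cpt_minus (f g : R -> R) x : continuity_pt f x -> continuity_pt g x -> continuity_pt (fun s => f s - g s) x.
Proof. intros; apply (continuity_pt_minus f g); auto. Qed.
Lemma cpt_mult (f g : R -> R) x : continuity_pt f x -> continuity_pt g x -> continuity_pt (fun s => f s * g s) x.
Proof. intros; apply (continuity_pt_mult f g); auto. Qed.
Lemma cpt_const (c x : R) : continuity_pt (fun _ => c) x.
Proof. apply continuity_pt_const. intros u v; reflexivity. Qed.
Lemma cpt_comp (f g : R -> R) x : continuity_pt f x -> continuity g -> continuity_pt (fun s => g (f s)) x.
Proof. intros H1 H2. apply (continuity_pt_comp f g); auto. Qed.

Lemma Fe_cont E (phi : R -> R) : (forall t, continuous phi t) -> forall t, continuous (fun s => Fe E s (phi s)) t.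
Proof.
  intros Hphi t. apply cpt_to_cont. unfold Fe, St, Ct.
  assert (Ha' : continuity atan) by (intros x; apply derivable_continuous_pt, derivable_pt_atan).
  assert (Hs : continuity_pt (fun s => sin (atan s)) t) by (apply cpt_comp; [apply Ha'| apply continuity_sin]).
  assert (Hc : continuity_pt (fun s => cos (atan s)) t) by (apply cpt_comp; [apply Ha'| apply continuity_cos]).
  assert (Hp : continuity_pt phi t) by (apply cont_to_cpt; auto).
  assert (Hsp : continuity_pt (fun s => sin (phi s)) t) by (apply cpt_comp; [auto| apply continuity_sin]).
  assert (Hcp : continuity_pt (fun s => cos (phi s)) t) by (apply cpt_comp; [auto| apply continuity_cos]).
  repeat first [ apply cpt_minus | apply cpt_plus | apply cpt_mult | apply cpt_const | assumption ].
Qed.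

Definition Sol (E : R) (y : R -> R) := forall t, is_derive y t (Fe E t (y t)).

Lemma sol_exists E t0 y0 : exists y, y t0 = y0 /\ Sol E y.
Proof.
  destruct (picard (Fe E) Lc (Mb E) Lc_pos (Fe_lip E) (Fe_bound E) (Fe_cont E) t0 y0) as [y [H1 H2]].
  exists y; split; auto.
Qed.

End Field.

Lemma sin_lb eta x : 0 <= eta <= PI / 2 -> eta <= x <= PI - eta -> sin eta <= sin x.
Proof.
  intros He Hx. pose proof PI_RGT_0.
  destruct (Rle_or_lt x (PI / 2)).
  - apply sin_incr_1; lra.
  - rewrite <- (sin_PI_x x). apply sin_incr_1; lra.
Qed.

Lemma acos_le E E' : -1 <= E <= 1 -> -1 <= E' <= 1 -> E <= E' -> acos E' <= acos E.
Proof.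
  intros H1 H2 H. destruct (Rle_or_lt (acos E') (acos E)) as [|Hlt]; auto. exfalso.
  pose proof (acos_bound E). pose proof (acos_bound E').
  pose proof (cos_decreasing_1 (acos E) (acos E') ltac:(lra) ltac:(lra) ltac:(lra) ltac:(lra) Hlt) as Hc.
  rewrite !cos_acos in Hc by auto. lra.
Qed.

Lemma acos_cont E : -1 < E < 1 -> forall eps, 0 < eps -> exists d, 0 < d /\ forall E', Rabs (E' - E) < d -> Rabs (acos E' - acos E) < eps.
Proof. intros H. apply cont_eps. apply derivable_continuous_pt, derivable_pt_acos; auto. Qed.

Section Asym.
Variables a gam lam E1 E2 : R.
Hypothesis Ha : 0 < a.
Hypothesis HE1 : 0 <= E1.
Hypothesis HE12 : E1 < E2.
Hypothesis HE2 : E2 < 1.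

Definition th2 := acos E2.
Definition eta := th2 / 2.

Lemma th2_bounds : 0 < th2 <= PI / 2.
Proof.
  unfold th2. split.
  - apply acos_bound_lt; lra.
  - rewrite <- acos_0. apply acos_le; lra.
Qed.

Lemma eta_bounds : 0 < eta <= PI / 4.
Proof. unfold eta. pose proof th2_bounds. lra. Qed.

Lemma sin_eta_pos : 0 < sin eta.
Proof. pose proof eta_bounds. pose proof PI_RGT_0. apply sin_gt_0; lra. Qed.

Definition InE E := E1 <= E <= E2.

Lemma acos_InE E : InE E -> th2 <= acos E <= PI / 2.
Proof.
  intros [H1 H2]. unfold th2. split.
  - apply acos_le; lra.
  - rewrite <- acos_0. apply acos_le; lra.
Qed.

Definition rho d := 2 * sin (d / 2) * sin eta.

Lemma rho_pos d : 0 < d <= eta -> 0 < rho d.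
Proof.
  intros Hd. unfold rho. pose proof sin_eta_pos. pose proof eta_bounds. pose proof PI_RGT_0.
  assert (0 < sin (d/2)) by (apply sin_gt_0; lra). nra.
Qed.

Lemma cos_gap_minus E d : InE E -> 0 < d <= eta -> rho d <= cos (acos E - d) - E.
Proof.
  intros HE Hd. pose proof (acos_InE E HE). pose proof eta_bounds. pose proof PI_RGT_0.
  unfold eta in *.
  rewrite <- (cos_acos E) at 2 by (unfold InE in HE; lra).
  rewrite form2. unfold rho.
  replace ((acos E - d - acos E) / 2) with (- (d/2)) by field.
  replace ((acos E - d + acos E) / 2) with (acos E - d/2) by field.
  rewrite sin_neg.
  assert (0 < sin (d/2)) by (apply sin_gt_0; lra).
  assert (sin (th2/2) <= sin (acos E - d/2)) by (apply sin_lb; lra).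
  unfold eta. nra.
Qed.

Lemma cos_gap_plus E d : InE E -> 0 < d <= eta -> rho d <= E - cos (acos E + d).
Proof.
  intros HE Hd. pose proof (acos_InE E HE). pose proof eta_bounds. pose proof PI_RGT_0.
  unfold eta in *.
  rewrite <- (cos_acos E) at 1 by (unfold InE in HE; lra).
  rewrite form2. unfold rho.
  replace ((acos E - (acos E + d)) / 2) with (- (d/2)) by field.
  replace ((acos E + (acos E + d)) / 2) with (acos E + d/2) by field.
  rewrite sin_neg.
  assert (0 < sin (d/2)) by (apply sin_gt_0; lra).
  assert (sin (th2/2) <= sin (acos E + d/2)) by (apply sin_lb; lra).
  unfold eta. nra.
Qed.

Lemma Fe_dev_pos E t y : 0 <= t ->
  Rabs (Fe a gam lam E t y - (2 * a * cos y - 2 * a * E)) <= K0 a gam lam * Ct t.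
Proof.
  intros Ht. unfold Fe, K0.
  pose proof (St_pos_bound t Ht). pose proof (Ct_pos t). pose proof (Ct_le1 t). pose proof (St_bnd t).
  pose proof (SIN_bound y). pose proof (COS_bound y).
  set (S := St t) in *. set (C := Ct t) in *.
  assert (A1 : Rabs (2 * a * (S - 1) * cos y) <= 2 * a * C).
  { replace (2 * a * (S - 1) * cos y) with ((2 * a * (S - 1)) * cos y) by ring. apply prod_bound; [|apply Rabs_le; lra].
    rewrite Rabs_mult, Rabs_right by lra. apply Rmult_le_compat_l; [lra|]. apply Rabs_le; lra. }
  assert (A2 : Rabs (2 * lam * C * sin y) <= 2 * Rabs lam * C).
  { replace (2 * lam * C * sin y) with ((2 * lam * C) * sin y) by ring. apply prod_bound; [|apply Rabs_le; lra].
    rewrite !Rabs_mult, (Rabs_right 2), (Rabs_right C) by lra. lra. }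
  assert (A3 : Rabs (2 * gam * S * C) <= 2 * Rabs gam * C).
  { replace (2 * gam * S * C) with ((2 * gam * C) * S) by ring. apply prod_bound; [|apply Rabs_le; lra].
    rewrite !Rabs_mult, (Rabs_right 2), (Rabs_right C) by lra. lra. }
  assert (A4 : Rabs (C ^ 2) <= C) by (rewrite Rabs_right; nra).
  replace (2 * a * S * cos y + 2 * lam * C * sin y + 2 * gam * S * C + C ^ 2 - 2 * a * E - (2 * a * cos y - 2 * a * E))
    with (2 * a * (S - 1) * cos y + 2 * lam * C * sin y + 2 * gam * S * C + C ^ 2) by ring.
  pose proof (Rabs_triang (2 * a * (S - 1) * cos y + 2 * lam * C * sin y + 2 * gam * S * C) (C ^ 2)).
  pose proof (Rabs_triang (2 * a * (S - 1) * cos y + 2 * lam * C * sin y) (2 * gam * S * C)).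
  pose proof (Rabs_triang (2 * a * (S - 1) * cos y) (2 * lam * C * sin y)).
  lra.
Qed.

Lemma Fe_dev_neg E t y : t <= 0 ->
  Rabs (Fe a gam lam E t y - (- 2 * a * cos y - 2 * a * E)) <= K0 a gam lam * Ct t.
Proof.
  intros Ht. unfold Fe, K0.
  pose proof (St_neg_bound t Ht). pose proof (Ct_pos t). pose proof (Ct_le1 t). pose proof (St_bnd t).
  pose proof (SIN_bound y). pose proof (COS_bound y).
  set (S := St t) in *. set (C := Ct t) in *.
  assert (A1 : Rabs (2 * a * (S + 1) * cos y) <= 2 * a * C).
  { replace (2 * a * (S + 1) * cos y) with ((2 * a * (S + 1)) * cos y) by ring. apply prod_bound; [|apply Rabs_le; lra].
    rewrite Rabs_mult, Rabs_right by lra. apply Rmult_le_compat_l; [lra|]. apply Rabs_le; lra. }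
  assert (A2 : Rabs (2 * lam * C * sin y) <= 2 * Rabs lam * C).
  { replace (2 * lam * C * sin y) with ((2 * lam * C) * sin y) by ring. apply prod_bound; [|apply Rabs_le; lra].
    rewrite !Rabs_mult, (Rabs_right 2), (Rabs_right C) by lra. lra. }
  assert (A3 : Rabs (2 * gam * S * C) <= 2 * Rabs gam * C).
  { replace (2 * gam * S * C) with ((2 * gam * C) * S) by ring. apply prod_bound; [|apply Rabs_le; lra].
    rewrite !Rabs_mult, (Rabs_right 2), (Rabs_right C) by lra. lra. }
  assert (A4 : Rabs (C ^ 2) <= C) by (rewrite Rabs_right; nra).
  replace (2 * a * S * cos y + 2 * lam * C * sin y + 2 * gam * S * C + C ^ 2 - 2 * a * E - (-2 * a * cos y - 2 * a * E))
    with (2 * a * (S + 1) * cos y + 2 * lam * C * sin y + 2 * gam * S * C + C ^ 2) by ring.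
  pose proof (Rabs_triang (2 * a * (S + 1) * cos y + 2 * lam * C * sin y + 2 * gam * S * C) (C ^ 2)).
  pose proof (Rabs_triang (2 * a * (S + 1) * cos y + 2 * lam * C * sin y) (2 * gam * S * C)).
  pose proof (Rabs_triang (2 * a * (S + 1) * cos y) (2 * lam * C * sin y)).
  lra.
Qed.

Definition kap := a * sin eta.
Definition eps0 := kap / (2 * a + 2 * Rabs lam + 1).
Definition T0 := / eps0.
Definition epsR d := a * rho d / K0 a gam lam.
Definition Td d := Rmax T0 (/ epsR d).

Lemma kap_pos : 0 < kap.
Proof. unfold kap. pose proof sin_eta_pos. nra. Qed.
Lemma eps0_pos : 0 < eps0.
Proof. unfold eps0. pose proof kap_pos. pose proof (Rabs_pos lam). apply Rdiv_lt_0_compat; lra. Qed.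
Lemma T0_pos : 0 < T0.
Proof. unfold T0. apply Rinv_0_lt_compat, eps0_pos. Qed.
Lemma epsR_pos d : 0 < d <= eta -> 0 < epsR d.
Proof. intros Hd. unfold epsR. pose proof (rho_pos d Hd). pose proof (K0_pos a gam lam Ha).
  apply Rdiv_lt_0_compat; nra. Qed.
Lemma Td_T0 d : T0 <= Td d.
Proof. unfold Td. apply Rmax_l. Qed.

Lemma Ct_Td d t : 0 < d <= eta -> Td d <= Rabs t -> Ct t <= epsR d.
Proof. intros Hd Ht. apply Ct_small; [apply epsR_pos; auto|]. pose proof (Rmax_r T0 (/ epsR d)). unfold Td in Ht. lra. Qed.
Lemma Ct_T0 t : T0 <= Rabs t -> Ct t <= eps0.
Proof. intros Ht. apply Ct_small; [apply eps0_pos| auto]. Qed.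

Lemma K0C_small d t : 0 < d <= eta -> Td d <= Rabs t -> K0 a gam lam * Ct t <= a * rho d.
Proof. intros Hd Ht. pose proof (Ct_Td d t Hd Ht). pose proof (K0_pos a gam lam Ha).
  unfold epsR in H. apply (Rmult_le_compat_l (K0 a gam lam)) in H; [|lra].
  replace (K0 a gam lam * (a * rho d / K0 a gam lam)) with (a * rho d) in H by (field; lra). lra. Qed.

Definition pE E := - PI + acos E.

Lemma cos_mPI u : cos (- PI + u) = - cos u.
Proof. rewrite cos_plus, cos_neg, sin_neg, cos_PI, sin_PI. ring. Qed.

Lemma F_right_plus E d t : InE E -> 0 < d <= eta -> Td d <= t -> 0 < Fe a gam lam E t (- acos E + d).
Proof.
  intros HE Hd Ht. pose proof (Td_T0 d). pose proof T0_pos.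
  assert (Hr : Td d <= Rabs t) by (rewrite Rabs_right; lra).
  pose proof (K0C_small d t Hd Hr). pose proof (Fe_dev_pos E t (- acos E + d) ltac:(lra)).
  apply Rabs_le_between in H2.
  replace (- acos E + d) with (- (acos E - d)) in H2 by ring. rewrite cos_neg in H2.
  pose proof (cos_gap_minus E d HE Hd). pose proof (rho_pos d Hd).
  replace (- acos E + d) with (- (acos E - d)) by ring. nra.
Qed.

Lemma F_right_minus E d t : InE E -> 0 < d <= eta -> Td d <= t -> Fe a gam lam E t (- acos E - d) < 0.
Proof.
  intros HE Hd Ht. pose proof (Td_T0 d). pose proof T0_pos.
  assert (Hr : Td d <= Rabs t) by (rewrite Rabs_right; lra).
  pose proof (K0C_small d t Hd Hr). pose proof (Fe_dev_pos E t (- acos E - d) ltac:(lra)).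
  apply Rabs_le_between in H2.
  replace (- acos E - d) with (- (acos E + d)) in H2 by ring. rewrite cos_neg in H2.
  pose proof (cos_gap_plus E d HE Hd). pose proof (rho_pos d Hd).
  replace (- acos E - d) with (- (acos E + d)) by ring. nra.
Qed.

Lemma F_left_plus E d t : InE E -> 0 < d <= eta -> t <= - Td d -> Fe a gam lam E t (pE E + d) < 0.
Proof.
  intros HE Hd Ht. pose proof (Td_T0 d). pose proof T0_pos.
  assert (Hr : Td d <= Rabs t) by (rewrite Rabs_left; lra).
  pose proof (K0C_small d t Hd Hr). pose proof (Fe_dev_neg E t (pE E + d) ltac:(lra)).
  apply Rabs_le_between in H2. unfold pE in *.
  replace (- PI + acos E + d) with (- PI + (acos E + d)) in * by ring. rewrite cos_mPI in H2.
  pose proof (cos_gap_plus E d HE Hd). pose proof (rho_pos d Hd). nra.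
Qed.

Lemma F_left_minus E d t : InE E -> 0 < d <= eta -> t <= - Td d -> 0 < Fe a gam lam E t (pE E - d).
Proof.
  intros HE Hd Ht. pose proof (Td_T0 d). pose proof T0_pos.
  assert (Hr : Td d <= Rabs t) by (rewrite Rabs_left; lra).
  pose proof (K0C_small d t Hd Hr). pose proof (Fe_dev_neg E t (pE E - d) ltac:(lra)).
  apply Rabs_le_between in H2. unfold pE in *.
  replace (- PI + acos E - d) with (- PI + (acos E - d)) in * by ring. rewrite cos_mPI in H2.
  pose proof (cos_gap_minus E d HE Hd). pose proof (rho_pos d Hd). nra.
Qed.

Definition inI y := - PI + eta <= y <= - eta.

Lemma dFe_slope t c : t <= - T0 -> inI c -> dFe a lam t c <= - kap.
Proof.
  intros Ht Hc. unfold dFe, inI, kap in *.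
  pose proof T0_pos.
  assert (HC : Ct t <= eps0) by (apply Ct_T0; rewrite Rabs_left; lra).
  pose proof (St_neg_bound t ltac:(lra)). pose proof (Ct_pos t). pose proof (Ct_le1 t).
  pose proof eta_bounds. pose proof PI_RGT_0.
  assert (Hs : sin eta <= sin (- c)) by (apply sin_lb; lra). rewrite sin_neg in Hs.
  pose proof sin_eta_pos. pose proof (SIN_bound eta).
  pose proof (COS_bound c).
  assert (A1 : - 2 * a * St t * sin c <= - 2 * a * (1 - Ct t) * sin eta).
  { assert ((1 - Ct t) * sin eta <= (- St t) * (- sin c)).
    { apply Rmult_le_compat; lra. }
    nra. }
  assert (A2 : 2 * lam * Ct t * cos c <= 2 * Rabs lam * Ct t).
  { assert (Rabs (2 * lam * Ct t * cos c) <= 2 * Rabs lam * Ct t).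
    { replace (2 * lam * Ct t * cos c) with ((2 * lam * Ct t) * cos c) by ring. apply prod_bound; [|apply Rabs_le; lra].
      rewrite !Rabs_mult, (Rabs_right 2), (Rabs_right (Ct t)) by lra. lra. }
    apply Rabs_le_between in H8. lra. }
  unfold eps0, kap in HC. pose proof (Rabs_pos lam).
  apply (Rmult_le_compat_l (2 * a + 2 * Rabs lam + 1)) in HC; [|lra].
  replace ((2 * a + 2 * Rabs lam + 1) * (a * sin eta / (2 * a + 2 * Rabs lam + 1))) with (a * sin eta) in HC by (field; lra).
  assert (a * Ct t * sin eta <= a * Ct t * 1) by (apply Rmult_le_compat_l; [nra| lra]). nra.
Qed.

Lemma Fe_contract E t y z : t <= - T0 -> inI y -> inI z ->
  (Fe a gam lam E t y - Fe a gam lam E t z) * (y - z) <= - kap * ((y - z) * (y - z)).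
Proof.
  intros Ht Hy Hz. destruct (Fe_mvt a gam lam E t y z) as [c [Hc ->]].
  assert (inI c).
  { unfold inI in *. pose proof (Rmin_l y z). pose proof (Rmin_r y z). pose proof (Rmax_l y z). pose proof (Rmax_r y z).
    unfold Rmin, Rmax in *. destruct (Rle_dec y z); lra. }
  pose proof (dFe_slope t c Ht H). pose proof (Rle_0_sqr (y - z)). unfold Rsqr in H1. nra.
Qed.

End Asym.

Lemma lim_m_eps (f : R -> R) (l : R) : is_lim f m_infty l -> forall eps, 0 < eps -> exists M, forall x, x < M -> Rabs (f x - l) < eps.
Proof. intros H eps He. apply is_lim_spec in H. unfold is_lim' in H. exact (H (mkposreal eps He)). Qed.
Lemma lim_p_eps (f : R -> R) (l : R) : is_lim f p_infty l -> forall eps, 0 < eps -> exists M, forall x, M < x -> Rabs (f x - l) < eps.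
Proof. intros H eps He. apply is_lim_spec in H. unfold is_lim' in H. exact (H (mkposreal eps He)). Qed.
Lemma lim_m_intro (f : R -> R) (l : R) : (forall eps, 0 < eps -> exists M, forall x, x < M -> Rabs (f x - l) < eps) -> is_lim f m_infty l.
Proof. intros H. apply is_lim_spec. unfold is_lim'. intros eps. apply (H eps (cond_pos eps)). Qed.
Lemma lim_p_intro (f : R -> R) (l : R) : (forall eps, 0 < eps -> exists M, forall x, M < x -> Rabs (f x - l) < eps) -> is_lim f p_infty l.
Proof. intros H. apply is_lim_spec. unfold is_lim'. intros eps. apply (H eps (cond_pos eps)). Qed.

Lemma exp_vanish k B t X : 0 < k -> 0 <= B -> (forall s, s <= t -> X <= exp (- k * (t - s)) * B) -> X <= 0.
Proof.
  intros Hk HB H. destruct (Rle_or_lt X 0) as [|HX]; auto. exfalso.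
  set (u := B / (k * X)).
  assert (Hu : 0 <= u) by (unfold u; apply Rmult_le_pos; [lra| left; apply Rinv_0_lt_compat; nra]).
  specialize (H (t - u) ltac:(lra)). replace (t - (t - u)) with u in H by ring.
  assert (He : 1 + k * u <= exp (k * u)).
  { destruct (Req_dec (k * u) 0) as [E|E]; [rewrite E, exp_0; lra| left; apply exp_ineq1; auto]. }
  assert (Hinv : exp (- k * u) = / exp (k * u)) by (rewrite <- exp_Ropp; f_equal; ring).
  rewrite Hinv in H.
  assert (exp (k * u) * X <= B).
  { pose proof (exp_pos (k*u)). apply (Rmult_le_compat_l (exp (k * u))) in H; [|lra].
    rewrite <- Rmult_assoc, Rinv_r in H by lra. lra. }
  assert (k * u * X = B) by (unfold u; field; lra).
  nra.
Qed.

Section Sols.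
Variables a gam lam E1 E2 : R.
Hypothesis Ha : 0 < a.
Hypothesis HE1 : 0 <= E1.
Hypothesis HE12 : E1 < E2.
Hypothesis HE2 : E2 < 1.

Notation InE := (InE E1 E2).
Notation eta := (eta E2).
Notation Td := (Td a gam lam E2).
Notation T0 := (T0 a lam E2).
Notation kap := (kap a E2).
Notation Fe := (Fe a gam lam).
Notation Sol := (Sol a gam lam).
Notation inI := (inI E2).

Lemma trap_left E d y t1 t2 : InE E -> 0 < d <= eta -> Sol E y -> t1 <= t2 -> t2 <= - Td d ->
  Rabs (y t1 - pE E) <= d -> Rabs (y t2 - pE E) <= d.
Proof.
  intros HE Hd Hs H12 H2 H1. apply Rabs_le_between in H1. apply Rabs_le_between.
  assert (y t2 <= pE E + d).
  { apply (barrier y (fun t => Fe E t (y t)) t1 t2); auto; [lra|].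
    intros u Hu Heq. rewrite Heq. apply (F_left_plus a gam lam E1 E2 Ha HE1 HE12 HE2); auto; lra. }
  assert (pE E - d <= y t2).
  { apply (barrier_ge y (fun t => Fe E t (y t)) t1 t2); auto; [lra|].
    intros u Hu Heq. rewrite Heq. apply (F_left_minus a gam lam E1 E2 Ha HE1 HE12 HE2); auto; lra. }
  lra.
Qed.

Lemma trap_lim E d y : InE E -> 0 < d <= eta -> Sol E y -> is_lim y m_infty (pE E) ->
  forall t, t <= - Td d -> Rabs (y t - pE E) <= d.
Proof.
  intros HE Hd Hs Hl t Ht. destruct (lim_m_eps y (pE E) Hl d ltac:(lra)) as [M HM].
  apply (trap_left E d y (Rmin (M - 1) t) t); auto.
  - apply Rmin_r.
  - left. apply HM. pose proof (Rmin_l (M - 1) t). lra.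
Qed.

Lemma trapped_inI E y : InE E -> Rabs (y - pE E) <= eta -> inI y.
Proof.
  intros HE H. apply Rabs_le_between in H. pose proof (acos_InE E1 E2 HE1 HE12 HE2 E HE).
  unfold inI, pE, eta in *. pose proof (th2_bounds E1 E2 HE1 HE12 HE2). unfold th2 in *. lra.
Qed.

Definition Lc' := Lc a lam.
Definition T1 := Td eta.
Definition Psi t := exp ((2 * Lc' + 1) * (Rabs t + T1)) * (4 * a * a / (kap * kap) + 4 * a * a).

Lemma der_sq (y z : R -> R) E E' c u : Sol E y -> Sol E' z ->
  is_derive (fun u => (y u - z u) * (y u - z u) + c) u (2 * (y u - z u) * (Fe E u (y u) - Fe E' u (z u))).
Proof.
  intros Hy Hz.
  apply (der_ext (fun u => (y u - z u) * (y u - z u) + c) _ u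
    ((Fe E u (y u) - Fe E' u (z u)) * (y u - z u) + (y u - z u) * (Fe E u (y u) - Fe E' u (z u)) + 0)); [reflexivity| ring|].
  apply der_plus; [|apply der_const].
  apply (der_mult (fun u => y u - z u) (fun u => y u - z u)); apply der_minus; auto.
Qed.

Lemma inI_diff y z : inI y -> inI z -> (y - z) * (y - z) <= PI * PI.
Proof. unfold inI. intros H1 H2. pose proof PI_RGT_0. pose proof (eta_bounds E1 E2 HE1 HE12 HE2). assert (0 <= (PI - (y - z)) * (PI + (y - z))) by (apply Rmult_le_pos; lra). nra. Qed.

Lemma pair_bound E E' y z : InE E -> InE E' -> Sol E y -> Sol E' z ->
  (forall t, t <= - T1 -> inI (y t) /\ inI (z t)) ->
  forall t, (y t - z t) * (y t - z t) <= Psi t * ((E - E') * (E - E')).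
Proof.
  intros HE HE' Hy Hz HI.
  pose proof (kap_pos a E1 E2 Ha HE1 HE12 HE2) as Hk.
  set (D := E - E').
  assert (HDD0 : 0 <= D * D) by (apply Rle_0_sqr).
  assert (Haa : 0 < 4 * a * a) by (apply Rmult_lt_0_compat; lra).
  assert (HaDD : 0 <= 4 * a * a * (D * D)) by (apply Rmult_le_pos; lra).
  assert (Hkk : 0 < kap * kap) by (apply Rmult_lt_0_compat; lra).
  assert (HT1 : T0 <= T1) by apply Td_T0.
  pose proof (T0_pos a lam E1 E2 Ha HE1 HE12 HE2) as HT0.
  assert (Hleft : forall t, t <= - T1 -> (y t - z t) * (y t - z t) <= 4 * a * a * (D * D) / (kap * kap)).
  { intros t Ht.
    set (c := 4 * a * a * (D * D) / (kap * kap)).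
    set (h := fun u => (y u - z u) * (y u - z u) + - c).
    assert (Hh : forall u, is_derive h u (2 * (y u - z u) * (Fe E u (y u) - Fe E' u (z u)))).
    { intros u. apply der_sq; auto. }
    assert (X : h t <= 0).
    { apply (exp_vanish kap (PI * PI) t (h t) Hk ltac:(pose proof PI_RGT_0; nra)).
      intros s Hs.
      replace (- kap * (t - s)) with (- kap * (t - s)) by ring.
      eapply Rle_trans; [apply (gronwall h _ (- kap) s t Hh Hs)|].
      - intros u Hu. destruct (HI u ltac:(lra)) as [Iy Iz].
        pose proof (Fe_contract a gam lam E1 E2 Ha HE1 HE12 HE2 E u (y u) (z u) ltac:(lra) Iy Iz) as Hc.
        pose proof (Fe_E a gam lam E E' u (z u)) as HEq.
        replace (Fe E u (y u) - Fe E' u (z u)) with ((Fe E u (y u) - Fe E u (z u)) + 2 * a * (E' - E)) by lra.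
        unfold h. fold D.
        assert (AM : 4 * a * (y u - z u) * (E' - E) <= kap * ((y u - z u) * (y u - z u)) + 4 * a * a * (D * D) / kap).
        { unfold D. assert (0 <= (kap * (y u - z u) - 2 * a * (E' - E)) * (kap * (y u - z u) - 2 * a * (E' - E))) by (pose proof (Rle_0_sqr (kap * (y u - z u) - 2 * a * (E' - E))) as Hq; unfold Rsqr in Hq; lra).
          apply (Rmult_le_reg_l kap); [lra|].
          replace (kap * (kap * ((y u - z u) * (y u - z u)) + 4 * a * a * ((E - E') * (E - E')) / kap))
            with (kap * kap * ((y u - z u) * (y u - z u)) + 4 * a * a * ((E - E') * (E - E'))) by (field; lra).
          nra. }
        unfold c. replace (- kap * ((y u - z u) * (y u - z u) + - (4 * a * a * (D * D) / (kap * kap))))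
          with (- kap * ((y u - z u) * (y u - z u)) + 4 * a * a * (D * D) / kap) by (field; lra).
        nra.
      - apply Rmult_le_compat_l; [left; apply exp_pos|].
        destruct (HI s ltac:(lra)) as [Iy Iz]. pose proof (inI_diff _ _ Iy Iz).
        unfold h, c. assert (0 <= 4 * a * a * (D * D) / (kap * kap)).
        { apply Rmult_le_pos; [lra| left; apply Rinv_0_lt_compat; lra]. }
        lra. }
    unfold h in X. unfold c in *. lra. }
  intros t. unfold Psi. fold D.
  assert (HL : 0 < Lc') by (apply Lc_pos; auto).
  assert (Hexp1 : 1 <= exp ((2 * Lc' + 1) * (Rabs t + T1))).
  { apply exp_ge1. pose proof (Rabs_pos t). nra. }
  assert (HDD : 0 <= D * D) by lra.
  assert (Hc1 : 0 <= 4 * a * a / (kap * kap)) by (apply Rmult_le_pos; [lra| left; apply Rinv_0_lt_compat; lra]).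
  destruct (Rle_or_lt t (- T1)) as [Ht|Ht].
  - specialize (Hleft t Ht).
    replace (4 * a * a * (D * D) / (kap * kap)) with (4 * a * a / (kap * kap) * (D * D)) in Hleft by (field; lra).
    assert (4 * a * a / (kap * kap) * (D * D) <= (4 * a * a / (kap * kap) + 4 * a * a) * (D * D)) by nra.
    set (P := (4 * a * a / (kap * kap) + 4 * a * a)) in *.
    assert (HP : 0 <= P * (D * D)) by (apply Rmult_le_pos; [unfold P; lra| lra]).
    assert (Hx : 1 * (P * (D * D)) <= exp ((2 * Lc' + 1) * (Rabs t + T1)) * (P * (D * D))) by (apply Rmult_le_compat_r; lra).
    rewrite Rmult_assoc. lra.
  - set (c := 4 * a * a * (D * D) / (2 * Lc' + 1)).
    set (h := fun u => (y u - z u) * (y u - z u) + c).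
    assert (Hh : forall u, is_derive h u (2 * (y u - z u) * (Fe E u (y u) - Fe E' u (z u)))).
    { intros u. apply der_sq; auto. }
    pose proof (gronwall h _ (2 * Lc' + 1) (- T1) t Hh ltac:(lra)) as G.
    assert (G' : h t <= exp ((2 * Lc' + 1) * (t - - T1)) * h (- T1)).
    { apply G. intros u Hu.
      pose proof (Fe_lip a gam lam Ha E u (y u) (z u)) as Hl. fold Lc' in Hl.
      pose proof (Fe_E a gam lam E E' u (z u)) as HEq.
      replace (Fe E u (y u) - Fe E' u (z u)) with ((Fe E u (y u) - Fe E u (z u)) + 2 * a * (E' - E)) by lra.
      set (dd := y u - z u) in *. set (A := Fe E u (y u) - Fe E u (z u)) in *.
      assert (dd * A <= Lc' * (dd * dd)).
      { pose proof (Rle_abs (dd * A)). rewrite Rabs_mult in H. 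
        assert (Rabs dd * Rabs A <= Rabs dd * (Lc' * Rabs dd)) by (apply Rmult_le_compat_l; [apply Rabs_pos| auto]).
        assert (Rabs dd * Rabs dd = dd * dd) by (rewrite <- Rabs_mult; apply Rabs_right; nra). nra. }
      assert (2 * dd * (2 * a * (E' - E)) <= dd * dd + 4 * a * a * (D * D)).
      { unfold D. pose proof (Rle_0_sqr (dd - 2 * a * (E' - E))) as Hq. unfold Rsqr in Hq. nra. }
      unfold h, c. fold dd.
      assert (4 * a * a * (D * D) = (2 * Lc' + 1) * (4 * a * a * (D * D) / (2 * Lc' + 1))) by (field; lra).
      nra. }
    destruct (HI (- T1) ltac:(lra)) as [_ _].
    pose proof (Hleft (- T1) ltac:(lra)) as HL1.
    unfold h in G'.
    assert (Hexp : exp ((2 * Lc' + 1) * (t - - T1)) <= exp ((2 * Lc' + 1) * (Rabs t + T1))).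
    { apply exp_le_mono. apply Rmult_le_compat_l; [lra|]. pose proof (Rle_abs t). lra. }
    assert (Hc2 : c <= 4 * a * a * (D * D)).
    { unfold c. unfold Rdiv. rewrite <- (Rmult_1_r (4 * a * a * (D * D))) at 2.
      apply Rmult_le_compat_l; [nra|]. rewrite <- Rinv_1. apply Rinv_le_contravar; lra. }
    assert (Hc0 : 0 <= c) by (unfold c; apply Rmult_le_pos; [nra| left; apply Rinv_0_lt_compat; lra]).
    assert (Hsum : (y (- T1) - z (- T1)) * (y (- T1) - z (- T1)) + c <= (4 * a * a / (kap * kap) + 4 * a * a) * (D * D)).
    { replace (4 * a * a * (D * D) / (kap * kap)) with (4 * a * a / (kap * kap) * (D * D)) in HL1 by (field; lra). nra. }
    assert (0 <= (y (- T1) - z (- T1)) * (y (- T1) - z (- T1)) + c) by (pose proof (Rle_0_sqr (y (- T1) - z (- T1))) as Hq; unfold Rsqr in Hq; lra).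
    assert (exp ((2 * Lc' + 1) * (t - - T1)) * ((y (- T1) - z (- T1)) * (y (- T1) - z (- T1)) + c)
      <= exp ((2 * Lc' + 1) * (Rabs t + T1)) * ((4 * a * a / (kap * kap) + 4 * a * a) * (D * D))).
    { apply Rmult_le_compat; auto. left; apply exp_pos. }
    rewrite Rmult_assoc. lra.
Qed.

End Sols.

Lemma nat_large x : exists N : nat, x <= INR N.
Proof. destruct (INR_archimed 1 x ltac:(lra)) as [N HN]. exists N. lra. Qed.

Lemma cv_bound_sq (u : nat -> R) l a B m : Un_cv u l -> (forall n, (n >= m)%nat -> (u n - a) * (u n - a) <= B) -> (l - a) * (l - a) <= B.
Proof.
  intros Hc Hb.
  assert (HB : 0 <= B) by (specialize (Hb m (le_n m)); pose proof (Rle_0_sqr (u m - a)); unfold Rsqr in *; lra).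
  assert (Rabs (l - a) <= sqrt B).
  { apply (cv_bound u l a (sqrt B) m Hc). intros n Hn. specialize (Hb n Hn).
    rewrite <- sqrt_Rsqr_abs. apply sqrt_le_1_alt. unfold Rsqr. auto. }
  pose proof (Rabs_pos (l - a)).
  assert (Rabs (l - a) * Rabs (l - a) <= sqrt B * sqrt B) by (apply Rmult_le_compat; auto).
  rewrite sqrt_sqrt in H1 by auto. rewrite <- Rabs_mult, Rabs_right in H1; auto.
  pose proof (Rle_0_sqr (l - a)). unfold Rsqr in H2. lra.
Qed.

Lemma exp_small k : 0 < k -> forall eps, 0 < eps -> exists N : nat, forall m : nat, (m >= N)%nat -> exp (- k * INR m) < eps.
Proof.
  intros Hk eps He. destruct (nat_large (/ (k * eps))) as [N HN]. exists N. intros m Hm.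
  apply le_INR in Hm.
  assert (1 + k * INR m <= exp (k * INR m)).
  { destruct (Req_dec (k * INR m) 0) as [E|E]; [rewrite E, exp_0; lra| left; apply exp_ineq1; auto]. }
  assert (exp (- k * INR m) = / exp (k * INR m)) by (rewrite <- exp_Ropp; f_equal; ring).
  rewrite H0. pose proof (exp_pos (k * INR m)).
  assert (k * eps * INR m >= 1).
  { assert (/ (k * eps) <= INR m) by lra. apply (Rmult_le_compat_l (k * eps)) in H2; [|nra].
    rewrite Rinv_r in H2 by nra. lra. }
  apply (Rmult_lt_reg_l (exp (k * INR m))); auto. rewrite Rinv_r by lra. nra.
Qed.

Section Cons.
Variables a gam lam E1 E2 : R.
Hypothesis Ha : 0 < a.
Hypothesis HE1 : 0 <= E1.
Hypothesis HE12 : E1 < E2.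
Hypothesis HE2 : E2 < 1.

Notation InE := (InE E1 E2).
Notation eta := (eta E2).
Notation Td := (Td a gam lam E2).
Notation T0 := (T0 a lam E2).
Notation kap := (kap a E2).
Notation Fe := (Fe a gam lam).
Notation Sol := (Sol a gam lam).
Notation inI := (inI E2).
Notation T1 := (T1 a gam lam E2).
Notation Lc' := (Lc' a lam).

Definition phi E (n : nat) : R -> R :=
  ysol (Fe E) (Lc a lam) (Mb a gam lam E) (- INR n) (pE E) (Lc_pos a lam Ha) (Fe_lip a gam lam Ha E)
    (Fe_bound a gam lam Ha E) (Fe_cont a gam lam E).

Lemma phi_sol E n : Sol E (phi E n).
Proof. intros t. apply ysol_deriv. Qed.
Lemma phi_init E n : phi E n (- INR n) = pE E.
Proof. apply ysol_t0. Qed.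

Lemma eta_pos : 0 < eta.
Proof. apply (eta_bounds E1 E2 HE1 HE12 HE2). Qed.
Lemma kap_pos' : 0 < kap.
Proof. apply (kap_pos a E1 E2 Ha HE1 HE12 HE2). Qed.
Lemma T1_T0 : T0 <= T1.
Proof. apply Td_T0. Qed.
Lemma T0_pos' : 0 < T0.
Proof. apply (T0_pos a lam E1 E2 Ha HE1 HE12 HE2). Qed.
Lemma Lc_pos' : 0 < Lc'.
Proof. apply Lc_pos; auto. Qed.

Lemma phi_trap E d n t : InE E -> 0 < d <= eta -> - INR n <= t -> t <= - Td d -> Rabs (phi E n t - pE E) <= d.
Proof.
  intros HE Hd H1 H2. apply (trap_left a gam lam E1 E2 Ha HE1 HE12 HE2 E d (phi E n) (- INR n) t); auto.
  - apply phi_sol.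
  - rewrite phi_init, Rminus_eq_0, Rabs_R0. lra.
Qed.

Definition Bf t := exp (2 * kap * (Rabs t + T1)) * exp ((2 * Lc' + 1) * (Rabs t + T1)) * (eta * eta).

Lemma Bf_mono t s : Rabs s <= Rabs t -> Bf s <= Bf t.
Proof.
  intros H. unfold Bf. pose proof kap_pos'. pose proof Lc_pos'. pose proof eta_pos.
  assert (exp (2 * kap * (Rabs s + T1)) <= exp (2 * kap * (Rabs t + T1))) by (apply exp_le_mono; nra).
  assert (exp ((2 * Lc' + 1) * (Rabs s + T1)) <= exp ((2 * Lc' + 1) * (Rabs t + T1))) by (apply exp_le_mono; nra).
  pose proof (exp_pos (2 * kap * (Rabs s + T1))). pose proof (exp_pos ((2 * Lc' + 1) * (Rabs s + T1))).
  apply Rmult_le_compat_r; [nra|]. apply Rmult_le_compat; lra.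
Qed.

Lemma der_sq0 (y z : R -> R) E u : Sol E y -> Sol E z ->
  is_derive (fun u => (y u - z u) * (y u - z u) + 0) u (2 * (y u - z u) * (Fe E u (y u) - Fe E u (z u))).
Proof. intros; apply der_sq; auto. Qed.

Lemma phi_cauchy E n m t : InE E -> (m <= n)%nat -> T1 <= INR m -> Rabs t <= INR m ->
  (phi E n t - phi E m t) * (phi E n t - phi E m t) <= Bf t * exp (- 2 * kap * INR m).
Proof.
  intros HE Hmn HT Ht.
  assert (HT' : Td eta <= INR m) by (unfold T1 in HT; exact HT).
  pose proof kap_pos'. pose proof Lc_pos'. pose proof eta_pos. pose proof T1_T0. pose proof T0_pos'.
  apply le_INR in Hmn.
  set (y := phi E n). set (z := phi E m).
  set (h := fun u => (y u - z u) * (y u - z u) + 0).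
  assert (Hh : forall u, is_derive h u (2 * (y u - z u) * (Fe E u (y u) - Fe E u (z u)))).
  { intros u. apply der_sq0; apply phi_sol. }
  assert (Hin : forall u, - INR m <= u -> u <= - T1 -> inI (y u) /\ inI (z u)).
  { intros u Hu1 Hu2. split; apply (trapped_inI E1 E2 HE1 HE12 HE2 E _ HE); apply phi_trap; auto; try lra.
  }
  assert (Hleft : forall t, - INR m <= t -> t <= - T1 -> h t <= exp (- 2 * kap * (t + INR m)) * (eta * eta)).
  { intros t' Ht1 Ht2.
    replace (t' + INR m) with (t' - - INR m) by ring.
    eapply Rle_trans; [apply (gronwall h _ (- 2 * kap) (- INR m) t' Hh Ht1)|].
    - intros u Hu. destruct (Hin u ltac:(lra) ltac:(lra)) as [Iy Iz].
      pose proof (Fe_contract a gam lam E1 E2 Ha HE1 HE12 HE2 E u (y u) (z u) ltac:(lra) Iy Iz) as Hc.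
      unfold h. nra.
    - apply Rmult_le_compat_l; [left; apply exp_pos|].
      unfold h. unfold z. rewrite phi_init. fold z.
      pose proof (phi_trap E eta n (- INR m) HE ltac:(lra) ltac:(lra) ltac:(lra)) as Hp.
      fold y in Hp. apply Rabs_le_between in Hp. nra. }
  assert (HBf : 1 <= exp ((2 * Lc' + 1) * (Rabs t + T1))) by (apply exp_ge1; pose proof (Rabs_pos t); nra).
  assert (HBf2 : 1 <= exp (2 * kap * (Rabs t + T1))) by (apply exp_ge1; pose proof (Rabs_pos t); nra).
  assert (Hee : 0 <= eta * eta) by nra.
  assert (Hexpm : exp (- 2 * kap * INR m) > 0) by apply exp_pos.
  destruct (Rle_or_lt t (- T1)) as [Ht1|Ht1].
  - specialize (Hleft t ltac:(apply Rabs_le_between in Ht; lra) Ht1). unfold h in Hleft. rewrite Rplus_0_r in Hleft.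
    assert (Hx : exp (- 2 * kap * (t + INR m)) = exp (- 2 * kap * t) * exp (- 2 * kap * INR m)) by (rewrite <- exp_plus; f_equal; ring).
    assert (exp (- 2 * kap * t) <= exp (2 * kap * (Rabs t + T1))).
    { apply exp_le_mono. pose proof (Rle_abs (- t)). rewrite Rabs_Ropp in H4. nra. }
    unfold Bf. rewrite Hx in Hleft.
    assert (exp (- 2 * kap * t) * exp (- 2 * kap * INR m) * (eta * eta) <=
            exp (2 * kap * (Rabs t + T1)) * exp (- 2 * kap * INR m) * (eta * eta)).
    { apply Rmult_le_compat_r; auto. apply Rmult_le_compat_r; lra. }
    assert (exp (2 * kap * (Rabs t + T1)) * exp (- 2 * kap * INR m) * (eta * eta) <=
            exp (2 * kap * (Rabs t + T1)) * exp ((2 * Lc' + 1) * (Rabs t + T1)) * (eta * eta) * exp (- 2 * kap * INR m)).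
    { pose proof (exp_pos (2 * kap * (Rabs t + T1))).
      assert (0 <= exp (2 * kap * (Rabs t + T1)) * exp (- 2 * kap * INR m) * (eta * eta)) by (apply Rmult_le_pos; [apply Rmult_le_pos|]; lra).
      replace (exp (2 * kap * (Rabs t + T1)) * exp ((2 * Lc' + 1) * (Rabs t + T1)) * (eta * eta) * exp (- 2 * kap * INR m))
        with (exp ((2 * Lc' + 1) * (Rabs t + T1)) * (exp (2 * kap * (Rabs t + T1)) * exp (- 2 * kap * INR m) * (eta * eta))) by ring.
      nra. }
    lra.
  - pose proof (gronwall h _ (2 * Lc' + 1) (- T1) t Hh ltac:(lra)) as G.
    assert (G' : h t <= exp ((2 * Lc' + 1) * (t - - T1)) * h (- T1)).
    { apply G. intros u Hu.
      pose proof (Fe_lip a gam lam Ha E u (y u) (z u)) as Hl. change (Lc a lam) with Lc' in Hl.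
      set (dd := y u - z u) in *. set (A := Fe E u (y u) - Fe E u (z u)) in *.
      assert (dd * A <= Lc' * (dd * dd)).
      { pose proof (Rle_abs (dd * A)). rewrite Rabs_mult in H4.
        assert (Rabs dd * Rabs A <= Rabs dd * (Lc' * Rabs dd)) by (apply Rmult_le_compat_l; [apply Rabs_pos| auto]).
        assert (Rabs dd * Rabs dd = dd * dd) by (rewrite <- Rabs_mult; apply Rabs_right; pose proof (Rle_0_sqr dd); unfold Rsqr in *; lra). nra. }
      unfold h. fold dd. pose proof (Rle_0_sqr dd). unfold Rsqr in *. nra. }
    pose proof (Hleft (- T1) ltac:(lra) ltac:(lra)) as HL1.
    unfold h in G'. rewrite Rplus_0_r in G'. unfold h in HL1.
    assert (Hx : exp (- 2 * kap * (- T1 + INR m)) = exp (2 * kap * T1) * exp (- 2 * kap * INR m)) by (rewrite <- exp_plus; f_equal; ring).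
    rewrite Hx in HL1.
    assert (exp ((2 * Lc' + 1) * (t - - T1)) <= exp ((2 * Lc' + 1) * (Rabs t + T1))).
    { apply exp_le_mono. pose proof (Rle_abs t). nra. }
    assert (exp (2 * kap * T1) <= exp (2 * kap * (Rabs t + T1))).
    { apply exp_le_mono. pose proof (Rabs_pos t). nra. }
    unfold Bf.
    set (A1 := exp ((2 * Lc' + 1) * (t - - T1))) in *. set (A2 := exp ((2 * Lc' + 1) * (Rabs t + T1))) in *.
    set (B1 := exp (2 * kap * T1)) in *. set (B2 := exp (2 * kap * (Rabs t + T1))) in *.
    set (X := exp (- 2 * kap * INR m)) in *.
    assert (0 < A1) by apply exp_pos. assert (0 < B1) by apply exp_pos.
    set (q := (y (- T1) - z (- T1)) * (y (- T1) - z (- T1)) + 0) in *.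
    assert (HQ : q <= B2 * X * (eta * eta)).
    { eapply Rle_trans; [exact HL1|]. apply Rmult_le_compat_r; auto. apply Rmult_le_compat_r; lra. }
    assert (A1 * q <= A2 * (B2 * X * (eta * eta))).
    { apply Rmult_le_compat; try lra. unfold q. pose proof (Rle_0_sqr (y (- T1) - z (- T1))). unfold Rsqr in *. lra. }
    replace (B2 * A2 * (eta * eta) * X) with (A2 * (B2 * X * (eta * eta))) by ring. lra.
Qed.

Lemma sq_lt_abs x e : 0 < e -> x * x < e * e -> Rabs x < e.
Proof.
  intros He H. destruct (Rlt_or_le (Rabs x) e) as [|Hge]; auto. exfalso.
  assert (Rabs x * Rabs x >= e * e) by (apply Rle_ge, Rmult_le_compat; lra).
  rewrite <- Rabs_mult, Rabs_right in H0; [lra|]. pose proof (Rle_0_sqr x). unfold Rsqr in H1. lra.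
Qed.

Definition G E t := real (Lim_seq (fun n => phi E n t)).

Lemma T1_eq : T1 = Td eta.
Proof. reflexivity. Qed.

Lemma phi_cv E t : InE E -> Un_cv (fun n => phi E n t) (G E t).
Proof.
  intros HE. apply is_lim_seq_Reals. unfold G. apply Lim_seq_correct'.
  apply ex_lim_seq_cauchy_corr. intros eps.
  pose proof kap_pos'. pose proof (cond_pos eps) as Hep.
  assert (HB : 0 <= Bf t).
  { unfold Bf. pose proof eta_pos. pose proof (exp_pos (2 * kap * (Rabs t + T1))). pose proof (exp_pos ((2 * Lc' + 1) * (Rabs t + T1))).
    apply Rmult_le_pos; [nra| nra]. }
  destruct (exp_small (2 * kap) ltac:(lra) (eps * eps / (Bf t + 1))) as [N1 HN1].
  { apply Rdiv_lt_0_compat; nra. }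
  destruct (nat_large (Rmax T1 (Rabs t))) as [N2 HN2].
  exists (max N1 N2). intros n m Hn Hm.
  assert (Hgen : forall n m, (max N1 N2 <= n)%nat -> (max N1 N2 <= m)%nat -> (m <= n)%nat -> Rabs (phi E n t - phi E m t) < eps).
  { intros n' m' Hn' Hm' Hle. apply sq_lt_abs; auto.
    assert (HI : INR N2 <= INR m') by (apply le_INR; lia).
    pose proof (Rmax_l T1 (Rabs t)). pose proof (Rmax_r T1 (Rabs t)).
    eapply Rle_lt_trans; [apply phi_cauchy; auto; lra|].
    specialize (HN1 m' ltac:(lia)). replace (- (2 * kap) * INR m') with (- 2 * kap * INR m') in HN1 by ring.
    set (X := exp (- 2 * kap * INR m')) in *. assert (0 < X) by apply exp_pos.
    apply (Rmult_lt_compat_l (Bf t + 1)) in HN1; [|lra].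
    replace ((Bf t + 1) * (eps * eps / (Bf t + 1))) with (eps * eps) in HN1 by (field; lra). nra. }
  destruct (Compare_dec.le_lt_dec m n).
  - apply Hgen; auto.
  - rewrite <- Rabs_Ropp. replace (- (phi E n t - phi E m t)) with (phi E m t - phi E n t) by ring. apply Hgen; auto; lia.
Qed.

Lemma G_phi_bound E m t : InE E -> T1 <= INR m -> Rabs t <= INR m ->
  (G E t - phi E m t) * (G E t - phi E m t) <= Bf t * exp (- 2 * kap * INR m).
Proof.
  intros HE H1 H2. apply (cv_bound_sq (fun n => phi E n t) _ _ _ m (phi_cv E t HE)).
  intros n Hn. apply phi_cauchy; auto.
Qed.

Lemma G_sol E : InE E -> Sol E (G E).
Proof.
  intros HE t. apply is_derive_Reals.
  pose proof kap_pos'. pose proof Lc_pos'.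
  destruct (nat_large (Rmax T1 (Rabs t + 1))) as [N HN].
  pose proof (Rmax_l T1 (Rabs t + 1)). pose proof (Rmax_r T1 (Rabs t + 1)).
  set (d := mkposreal 1 Rlt_0_1).
  apply (CVU_derivable (fun n => phi E (n + N)) (fun n s => Fe E s (phi E (n + N) s)) (G E) (fun s => Fe E s (G E s)) t d).
  - intros eps He.
    set (B := Bf (Rabs t + 1)).
    assert (HB : 0 <= B).
    { unfold B, Bf. pose proof eta_pos. pose proof (exp_pos (2 * kap * (Rabs (Rabs t + 1) + T1))). pose proof (exp_pos ((2 * Lc' + 1) * (Rabs (Rabs t + 1) + T1))).
      apply Rmult_le_pos; [nra| nra]. }
    set (e' := eps / Lc').
    assert (He' : 0 < e') by (apply Rdiv_lt_0_compat; lra).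
    destruct (exp_small (2 * kap) ltac:(lra) (e' * e' / (B + 1))) as [N1 HN1].
    { apply Rdiv_lt_0_compat; nra. }
    exists N1. intros n y Hn Hy. unfold Boule in Hy. simpl in Hy.
    assert (Hy' : Rabs y <= Rabs t + 1).
    { replace y with ((y - t) + t) by ring. eapply Rle_trans; [apply Rabs_triang|]. lra. }
    assert (HI : INR N <= INR (n + N)) by (apply le_INR; lia).
    pose proof (G_phi_bound E (n + N) y HE ltac:(lra) ltac:(lra)) as Hb.
    assert (Bf y <= B) by (unfold B; apply Bf_mono; rewrite (Rabs_right (Rabs t + 1)); [lra| pose proof (Rabs_pos t); lra]).
    specialize (HN1 (n + N)%nat ltac:(lia)). replace (- (2 * kap) * INR (n + N)) with (- 2 * kap * INR (n + N)) in HN1 by ring.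
    set (X := exp (- 2 * kap * INR (n + N))) in *. assert (0 < X) by apply exp_pos.
    assert (Hsq : (G E y - phi E (n + N) y) * (G E y - phi E (n + N) y) < e' * e').
    { apply (Rmult_lt_compat_l (B + 1)) in HN1; [|lra].
      replace ((B + 1) * (e' * e' / (B + 1))) with (e' * e') in HN1 by (field; lra).
      assert (Bf y * X <= B * X) by (apply Rmult_le_compat_r; lra). nra. }
    apply sq_lt_abs in Hsq; auto.
    eapply Rle_lt_trans; [apply (Fe_lip a gam lam Ha)|].
    apply (Rmult_lt_compat_l Lc') in Hsq; auto. unfold e' in Hsq.
    replace (Lc' * (eps / Lc')) with eps in Hsq by (field; lra). exact Hsq.
  - intros x _. apply (CV_shift' (fun n => phi E n x) N). apply phi_cv; auto.
  - intros n x _. apply is_derive_Reals. apply phi_sol.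
  - unfold Boule; simpl. rewrite Rminus_eq_0, Rabs_R0; lra.
Qed.

Lemma G_trap E d t : InE E -> 0 < d <= eta -> t <= - Td d -> Rabs (G E t - pE E) <= d.
Proof.
  intros HE Hd Ht. destruct (nat_large (Rabs t)) as [m Hm].
  apply (cv_bound (fun n => phi E n t) _ _ _ m (phi_cv E t HE)).
  intros n Hn. apply phi_trap; auto.
  apply le_INR in Hn. pose proof (Rle_abs (- t)). rewrite Rabs_Ropp in H. lra.
Qed.

Lemma G_lim E : InE E -> is_lim (G E) m_infty (pE E).
Proof.
  intros HE. apply lim_m_intro. intros eps He. pose proof eta_pos.
  set (d := Rmin (eps / 2) eta).
  assert (Hd : 0 < d <= eta) by (split; [apply Rmin_glb_lt; lra| apply Rmin_r]).
  exists (- Td d). intros x Hx. apply Rle_lt_trans with d; [apply G_trap; auto; lra|].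
  pose proof (Rmin_l (eps/2) eta). fold d in H0. lra.
Qed.

Lemma G_inI E t : InE E -> t <= - T1 -> inI (G E t).
Proof.
  intros HE Ht. apply (trapped_inI E1 E2 HE1 HE12 HE2 E _ HE). apply G_trap; auto.
  pose proof eta_pos; lra.
Qed.

Lemma G_pair E E' t : InE E -> InE E' -> (G E t - G E' t) * (G E t - G E' t) <= Psi a gam lam E2 t * ((E - E') * (E - E')).
Proof.
  intros HE HE'. apply (pair_bound a gam lam E1 E2 Ha HE1 HE12 HE2 E E' (G E) (G E')); auto; try (apply G_sol; auto).
  intros s Hs; split; apply G_inI; auto.
Qed.

Lemma G_uniq E y : InE E -> Sol E y -> is_lim y m_infty (pE E) -> forall t, y t = G E t.
Proof.
  intros HE Hy Hl t.
  pose proof (pair_bound a gam lam E1 E2 Ha HE1 HE12 HE2 E E y (G E) HE HE Hy (G_sol E HE)) as P.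
  assert (HI : forall t, t <= - T1 -> inI (y t) /\ inI (G E t)).
  { intros s Hs. split; [|apply G_inI; auto].
    apply (trapped_inI E1 E2 HE1 HE12 HE2 E _ HE).
    apply (trap_lim a gam lam E1 E2 Ha HE1 HE12 HE2 E eta y HE ltac:(pose proof eta_pos; lra) Hy Hl). exact Hs. }
  specialize (P HI t). rewrite Rminus_eq_0, Rmult_0_r, Rmult_0_r in P.
  pose proof (Rle_0_sqr (y t - G E t)). unfold Rsqr in H. nra.
Qed.

End Cons.

Lemma shift_lim_m (w : R -> R) (l c : R) : is_lim w m_infty l -> is_lim (fun u => w (u - c)) m_infty l.
Proof.
  intros H. apply lim_m_intro. intros eps He. destruct (lim_m_eps w l H eps He) as [M HM].
  exists (M + c). intros x Hx. apply HM. lra.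
Qed.
Lemma shift_lim_p (w : R -> R) (l c : R) : is_lim w p_infty l -> is_lim (fun u => w (u - c)) p_infty l.
Proof.
  intros H. apply lim_p_intro. intros eps He. destruct (lim_p_eps w l H eps He) as [M HM].
  exists (M + c). intros x Hx. apply HM. lra.
Qed.

Lemma atan_lim_p : is_lim atan p_infty (PI / 2).
Proof.
  apply lim_p_intro. intros eps He. pose proof PI_RGT_0.
  set (e := Rmin (eps / 2) (PI / 4)).
  assert (He1 : 0 < e) by (apply Rmin_glb_lt; lra). assert (e <= eps / 2) by apply Rmin_l. assert (e <= PI / 4) by apply Rmin_r.
  exists (tan (PI / 2 - e)). intros x Hx.
  apply atan_increasing in Hx. rewrite atan_tan in Hx by lra.
  pose proof (atan_bound x). rewrite Rabs_left; lra.
Qed.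

Lemma atan_lim_m : is_lim atan m_infty (- PI / 2).
Proof.
  apply lim_m_intro. intros eps He. pose proof PI_RGT_0.
  set (e := Rmin (eps / 2) (PI / 4)).
  assert (He1 : 0 < e) by (apply Rmin_glb_lt; lra). assert (e <= eps / 2) by apply Rmin_l. assert (e <= PI / 4) by apply Rmin_r.
  exists (tan (- PI / 2 + e)). intros x Hx.
  apply atan_increasing in Hx. rewrite atan_tan in Hx by lra.
  pose proof (atan_bound x). rewrite Rabs_right; lra.
Qed.

Lemma atan_deriv t : is_derive atan t (xi_field (atan t)).
Proof.
  apply is_derive_Reals. unfold xi_field.
  replace (cos (atan t) ^ 2) with (/ (1 + t ^ 2)).
  - apply derivable_pt_lim_atan.
  - rewrite cos_atan. pose proof (sqrt1t_pos t).
    assert (Hs : sqrt (1 + t²) * sqrt (1 + t²) = 1 + t²) by (apply sqrt_sqrt; pose proof (Rle_0_sqr t); lra).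
    unfold Rsqr in *. simpl. replace (t * (t * 1)) with (t * t) by ring. set (s := sqrt (1 + t * t)) in *. rewrite <- Hs. field. lra.
Qed.

Lemma orbit_to_sol a gam lam E x w : is_orbit a gam lam E x w ->
  exists c, (forall t, x t = atan (t + c)) /\ Sol a gam lam E (fun u => w (u - c)).
Proof.
  intros Horb.
  set (g := fun t => tan (x t) - t).
  assert (Hg : forall t, is_derive g t 0).
  { intros t. destruct (Horb t) as [Hb [Hx Hw]].
    assert (Hc : 0 < cos (x t)) by (apply cos_gt_0; lra).
    apply (der_ext g g t ((tan (x t) ^ 2 + 1) * xi_field (x t) - 1)); [reflexivity| |].
    - unfold xi_field, tan. transitivity (sin (x t) ^ 2 + cos (x t) ^ 2 - 1); [field; lra |]. pose proof (sin2_cos2 (x t)) as Hsc. unfold Rsqr in Hsc. simpl. lra.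
    - apply der_minus; [| apply der_id].
      apply (der_ext (fun t => tan (x t)) _ t (xi_field (x t) * (tan (x t) ^ 2 + 1))); [reflexivity| ring|].
      apply (is_derive_comp tan x t). apply is_derive_tan; lra. exact Hx. }
  assert (Hconst : forall t, g t = g 0).
  { intros t.
    assert (forall p q, p <= q -> g p = g q).
    { intros p q Hpq.
      assert (g p <= g q) by (apply (mono_deriv g (fun _ => 0)); auto; intros; lra).
      assert ((fun t => - g t) p <= (fun t => - g t) q).
      { apply (mono_deriv (fun t => - g t) (fun _ => - 0)); auto; [intros; apply der_opp; auto| intros; lra]. }
      simpl in *. lra. }
    destruct (Rle_or_lt t 0); [apply H; auto| symmetry; apply H; lra]. }
  exists (tan (x 0)).
  assert (Hx : forall t, x t = atan (t + tan (x 0))).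
  { intros t. specialize (Hconst t). unfold g in Hconst.
    replace (t + tan (x 0)) with (tan (x t)) by lra.
    destruct (Horb t) as [Hb _]. rewrite atan_tan; auto. lra. }
  split; auto.
  unfold Sol. intros u. change R in u. set (c := tan (x 0)) in *.
  destruct (Horb (u - c)) as [_ [_ Hw]].
  rewrite (Hx (u - c)) in Hw. replace (u - c + c) with u in Hw by ring.
  apply (der_ext (fun u => w (u - c)) _ u (1 * Om_field a gam lam E (atan u) (w (u - c)))); [reflexivity| unfold Fe, St, Ct, Om_field; ring|].
  apply (is_derive_comp w (fun u => u - c) u). exact Hw.
  apply (der_ext (fun u => u - c) _ u (1 - 0)); [reflexivity| ring|]. apply der_minus; [apply der_id| apply der_const].
Qed.

Lemma connect (P Q : R -> Prop) a b : a <= b -> P a -> Q b ->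
  (forall x, a <= x <= b -> P x -> exists e, 0 < e /\ forall y, a <= y <= b -> Rabs (y - x) < e -> P y) ->
  (forall x, a <= x <= b -> Q x -> exists e, 0 < e /\ forall y, a <= y <= b -> Rabs (y - x) < e -> Q y) ->
  (forall x, a <= x <= b -> P x -> Q x -> False) ->
  exists x, a <= x <= b /\ ~ P x /\ ~ Q x.
Proof.
  intros Hab Pa Qb HP HQ Hdis.
  destruct (classic (exists x, a <= x <= b /\ ~ P x /\ ~ Q x)) as [|Hno]; auto. exfalso.
  assert (Hall : forall x, a <= x <= b -> P x \/ Q x).
  { intros x Hx. destruct (classic (P x)); auto. destruct (classic (Q x)); auto. exfalso; apply Hno; eauto. }
  set (A := fun x => a <= x <= b /\ forall y, a <= y <= x -> P y).
  assert (Hb : bound A) by (exists b; intros x [Hx _]; lra).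
  assert (Hne : exists x, A x).
  { exists a. split; [lra|]. intros y Hy. replace y with a by lra. auto. }
  destruct (completeness A Hb Hne) as [c [Hub Hlub]].
  assert (Hac : a <= c) by (apply Hub; destruct Hne; split; [lra| intros y Hy; replace y with a by lra; auto]).
  assert (Hcb : c <= b) by (apply Hlub; intros x [Hx _]; lra).
  assert (Hbelow : forall y, a <= y < c -> P y).
  { intros y Hy. destruct (classic (exists x, A x /\ y <= x)) as [[x [[Hx1 Hx2] Hyx]]|Hn].
    - apply Hx2; lra.
    - assert (c <= y). { apply Hlub. intros x Hx. destruct (Rle_or_lt x y); auto. exfalso; apply Hn; exists x; split; auto; lra. }
      lra. }
  destruct (Hall c ltac:(lra)) as [Pc|Qc].
  - destruct (HP c ltac:(lra) Pc) as [e [He HPe]].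
    set (c' := Rmin (c + e / 2) b).
    assert (Hc' : A c').
    { split; [unfold c'; pose proof (Rmin_r (c + e/2) b); unfold Rmin; destruct (Rle_dec (c + e/2) b); lra|].
      intros y Hy. destruct (Rlt_or_le y c) as [Hyc|Hyc]; [apply Hbelow; lra|].
      apply HPe; [unfold c' in Hy; pose proof (Rmin_r (c + e/2) b); lra|].
      pose proof (Rmin_l (c + e/2) b). unfold c' in Hy. rewrite Rabs_right; lra. }
    specialize (Hub c' Hc').
    assert (c' = b).
    { unfold c' in *. unfold Rmin in *. destruct (Rle_dec (c + e/2) b); lra. }
    assert (Hcb' : c = b) by lra. rewrite Hcb' in Pc. apply (Hdis b); auto; lra.
  - assert (Hac' : a < c).
    { destruct (Req_dec a c) as [E|E]; [subst; exfalso; apply (Hdis c); auto; lra| lra]. }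
    destruct (HQ c ltac:(lra) Qc) as [e [He HQe]].
    set (y := Rmax a (c - e / 2)).
    assert (a <= y < c) by (unfold y, Rmax; destruct (Rle_dec a (c - e/2)); lra).
    apply (Hdis y); [lra| |].
    + apply Hbelow; auto.
    + apply HQe; [lra|]. unfold y, Rmax. destruct (Rle_dec a (c - e/2)); rewrite Rabs_left; lra.
Qed.

Section Main.
Variables a gam lam E1 E2 : R.
Hypothesis Ha : 0 < a.
Hypothesis HE1 : 0 <= E1.
Hypothesis HE12 : E1 < E2.
Hypothesis HE2 : E2 < 1.

Notation InE := (InE E1 E2).
Notation eta := (eta E2).
Notation Td := (Td a gam lam E2).
Notation Fe := (Fe a gam lam).
Notation Sol := (Sol a gam lam).
Notation G := (G a gam lam Ha).

Lemma InE_bnd E : InE E -> -1 < E < 1.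
Proof. unfold InE. lra. Qed.

Lemma U_forever E d t1 t : InE E -> 0 < d <= eta -> Td d <= t1 -> t1 <= t ->
  - acos E + d < G E t1 -> - acos E + d <= G E t.
Proof.
  intros HE Hd H1 H2 H3.
  apply (barrier_ge (G E) (fun s => Fe E s (G E s)) t1 t); auto; [apply (G_sol a gam lam E1 E2 Ha HE1 HE12 HE2); auto| lra|].
  intros u Hu Heq. rewrite Heq. apply (F_right_plus a gam lam E1 E2 Ha HE1 HE12 HE2); auto; lra.
Qed.

Lemma V_forever E d t1 t : InE E -> 0 < d <= eta -> Td d <= t1 -> t1 <= t ->
  G E t1 < - acos E - d -> G E t <= - acos E - d.
Proof.
  intros HE Hd H1 H2 H3.
  apply (barrier (G E) (fun s => Fe E s (G E s)) t1 t); auto; [apply (G_sol a gam lam E1 E2 Ha HE1 HE12 HE2); auto| lra|].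
  intros u Hu Heq. rewrite Heq. apply (F_right_minus a gam lam E1 E2 Ha HE1 HE12 HE2); auto; lra.
Qed.

Lemma Gacos_cont E0 t : InE E0 -> forall eps, 0 < eps -> exists dl, 0 < dl /\ forall E, InE E -> Rabs (E - E0) < dl ->
  Rabs ((G E t + acos E) - (G E0 t + acos E0)) < eps.
Proof.
  intros HE0 eps He.
  destruct (acos_cont E0 (InE_bnd E0 HE0) (eps / 2) ltac:(lra)) as [d1 [Hd1 Hac]].
  set (Ps := Psi a gam lam E2 t).
  assert (HPs : 0 <= Ps).
  { unfold Ps, Psi. pose proof (exp_pos ((2 * Lc' a lam + 1) * (Rabs t + T1 a gam lam E2))).
    pose proof (kap_pos a E1 E2 Ha HE1 HE12 HE2).
    assert (0 <= 4 * a * a / (kap a E2 * kap a E2)) by (apply Rmult_le_pos; [nra| left; apply Rinv_0_lt_compat; nra]).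
    apply Rmult_le_pos; nra. }
  set (r := Rmin 1 (eps * eps / (16 * (Ps + 1)))).
  assert (Hr : 0 < r) by (apply Rmin_glb_lt; [lra| apply Rdiv_lt_0_compat; nra]).
  assert (Hr1 : r <= 1) by apply Rmin_l.
  assert (Hr2 : r <= eps * eps / (16 * (Ps + 1))) by apply Rmin_r.
  exists (Rmin d1 r). split; [apply Rmin_glb_lt; auto|].
  intros E HE Hd.
  pose proof (Rmin_l d1 r). pose proof (Rmin_r d1 r).
  specialize (Hac E ltac:(lra)).
  pose proof (G_pair a gam lam E1 E2 Ha HE1 HE12 HE2 E E0 t HE HE0) as Hp. fold Ps in Hp.
  assert (HEE : (E - E0) * (E - E0) <= r).
  { assert (Rabs (E - E0) < r) by lra.
    assert (Rabs (E - E0) * Rabs (E - E0) <= r * r) by (apply Rmult_le_compat; try apply Rabs_pos; lra).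
    rewrite <- Rabs_mult, Rabs_right in H2 by (pose proof (Rle_0_sqr (E - E0)); unfold Rsqr in *; lra). nra. }
  assert (Hsq : (G E t - G E0 t) * (G E t - G E0 t) < (eps / 2) * (eps / 2)).
  { eapply Rle_lt_trans; [exact Hp|].
    assert (Ps * ((E - E0) * (E - E0)) <= Ps * r) by (apply Rmult_le_compat_l; auto).
    assert (Ps * r <= Ps * (eps * eps / (16 * (Ps + 1)))) by (apply Rmult_le_compat_l; auto).
    assert (Ps * (eps * eps / (16 * (Ps + 1))) < eps / 2 * (eps / 2)).
    { replace (Ps * (eps * eps / (16 * (Ps + 1)))) with ((eps * eps / 16) * (Ps / (Ps + 1))) by (field; lra).
      assert (Ps / (Ps + 1) < 1) by (apply (Rmult_lt_reg_r (Ps + 1)); [lra|]; field_simplify; lra).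
      assert (0 < eps * eps / 16) by nra. nra. }
    lra. }
  apply sq_lt_abs in Hsq; [|lra].
  replace (G E t + acos E - (G E0 t + acos E0)) with ((G E t - G E0 t) + (acos E - acos E0)) by ring.
  eapply Rle_lt_trans; [apply Rabs_triang|]. lra.
Qed.

Definition Uset E := exists d, (0 < d <= eta) /\ exists t, Td d <= t /\ - acos E + d < G E t.
Definition Vset E := exists d, (0 < d <= eta) /\ exists t, Td d <= t /\ G E t < - acos E - d.

Lemma UV_disj E : InE E -> Uset E -> Vset E -> False.
Proof.
  intros HE [d1 [Hd1 [t1 [Ht1 H1]]]] [d2 [Hd2 [t2 [Ht2 H2]]]].
  set (t := Rmax t1 t2).
  pose proof (U_forever E d1 t1 t HE Hd1 Ht1 (Rmax_l _ _) H1).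
  pose proof (V_forever E d2 t2 t HE Hd2 Ht2 (Rmax_r _ _) H2).
  lra.
Qed.

Lemma U_open E0 : InE E0 -> Uset E0 -> exists e, 0 < e /\ forall E, InE E -> Rabs (E - E0) < e -> Uset E.
Proof.
  intros HE0 [d [Hd [t [Ht H]]]].
  destruct (Gacos_cont E0 t HE0 (G E0 t + acos E0 - d) ltac:(lra)) as [dl [Hdl Hc]].
  exists dl. split; auto. intros E HE HEd. exists d. split; auto. exists t. split; auto.
  specialize (Hc E HE HEd). apply Rabs_lt_between in Hc. lra.
Qed.

Lemma V_open E0 : InE E0 -> Vset E0 -> exists e, 0 < e /\ forall E, InE E -> Rabs (E - E0) < e -> Vset E.
Proof.
  intros HE0 [d [Hd [t [Ht H]]]].
  destruct (Gacos_cont E0 t HE0 (- d - G E0 t - acos E0) ltac:(lra)) as [dl [Hdl Hc]].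
  exists dl. split; auto. intros E HE HEd. exists d. split; auto. exists t. split; auto.
  specialize (Hc E HE HEd). apply Rabs_lt_between in Hc. lra.
Qed.

Lemma connector_of E : InE E -> ~ Uset E -> ~ Vset E -> saddles_connector a gam lam E.
Proof.
  intros HE HU HV.
  exists atan, (G E). split; [|split].
  - intros t. split; [apply atan_bound| split; [apply atan_deriv|]].
    apply (G_sol a gam lam E1 E2 Ha HE1 HE12 HE2 E HE).
  - split; [apply atan_lim_m|]. apply (G_lim a gam lam E1 E2 Ha HE1 HE12 HE2 E HE).
  - exists 0%Z. split; [apply atan_lim_p|].
    replace (- acos E + 2 * PI * IZR 0) with (- acos E) by (simpl; ring).
    apply lim_p_intro. intros eps He.
    pose proof (eta_pos E1 E2 HE1 HE12 HE2).
    set (d := Rmin (eps / 2) eta).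
    assert (Hd : 0 < d <= eta) by (split; [apply Rmin_glb_lt; lra| apply Rmin_r]).
    assert (d <= eps / 2) by apply Rmin_l.
    exists (Td d). intros x Hx.
    assert (- acos E - d <= G E x).
    { destruct (Rle_or_lt (- acos E - d) (G E x)); auto. exfalso. apply HV. exists d. split; auto. exists x. split; auto; lra. }
    assert (G E x <= - acos E + d).
    { destruct (Rle_or_lt (G E x) (- acos E + d)); auto. exfalso. apply HU. exists d. split; auto. exists x. split; auto; lra. }
    apply Rabs_lt_between. lra.
Qed.

Lemma main_thm :
  corridor a gam lam E1 0%Z ->
  (exists k : Z, (1 <= k)%Z /\ corridor a gam lam E2 k) ->
  exists E : R, E1 < E < E2 /\ saddles_connector a gam lam E.
Proof.
  intros [_ [x1 [w1 [Horb1 [[_ Hal1] [_ Hom1]]]]]] [k [Hk [_ [x2 [w2 [Horb2 [[_ Hal2] [_ Hom2]]]]]]]].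
  assert (HIE1 : InE E1) by (unfold InE; lra).
  assert (HIE2 : InE E2) by (unfold InE; lra).
  pose proof (eta_pos E1 E2 HE1 HE12 HE2) as Heta.
  pose proof (acos_InE E1 E2 HE1 HE12 HE2 E1 HIE1) as Hac1.
  pose proof (acos_InE E1 E2 HE1 HE12 HE2 E2 HIE2) as Hac2.
  pose proof PI_RGT_0.
  assert (Heta2 : eta = acos E2 / 2) by reflexivity.
  destruct (orbit_to_sol a gam lam E1 x1 w1 Horb1) as [c1 [_ HS1]].
  destruct (orbit_to_sol a gam lam E2 x2 w2 Horb2) as [c2 [_ HS2]].
  pose proof (G_uniq a gam lam E1 E2 Ha HE1 HE12 HE2 E1 _ HIE1 HS1 (shift_lim_m w1 _ c1 Hal1)) as U1.
  pose proof (G_uniq a gam lam E1 E2 Ha HE1 HE12 HE2 E2 _ HIE2 HS2 (shift_lim_m w2 _ c2 Hal2)) as U2.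
  pose proof (shift_lim_p w1 _ c1 Hom1) as L1. pose proof (shift_lim_p w2 _ c2 Hom2) as L2.
  assert (UE1 : Uset E1).
  { destruct (lim_p_eps _ _ L1 (2 * acos E1 - eta) ltac:(unfold eta, th2 in *; lra)) as [M HM].
    exists eta. split; [lra|]. exists (Rmax (M + 1) (Td eta)). split; [apply Rmax_r|].
    pose proof (Rmax_l (M + 1) (Td eta)).
    specialize (HM (Rmax (M + 1) (Td eta)) ltac:(lra)). rewrite U1 in HM. apply Rabs_lt_between in HM.
    simpl in HM. lra. }
  assert (UE2 : Vset E2).
  { apply IZR_le in Hk.
    destruct (lim_p_eps _ _ L2 (2 * PI - 2 * acos E2 - eta) ltac:(unfold eta, th2 in *; lra)) as [M HM].
    exists eta. split; [lra|]. exists (Rmax (M + 1) (Td eta)). split; [apply Rmax_r|].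
    pose proof (Rmax_l (M + 1) (Td eta)).
    specialize (HM (Rmax (M + 1) (Td eta)) ltac:(lra)). rewrite U2 in HM. apply Rabs_lt_between in HM.
    assert (2 * PI * IZR k >= 2 * PI) by nra. lra. }
  destruct (connect Uset Vset E1 E2 ltac:(lra) UE1 UE2) as [E [HE [HnU HnV]]].
  - intros x Hx Px. destruct (U_open x Hx Px) as [e [He HUe]]. exists e. split; auto.
  - intros x Hx Px. destruct (V_open x Hx Px) as [e [He HUe]]. exists e. split; auto.
  - intros x Hx Px Qx. apply (UV_disj x); auto.
  - exists E. split; [|apply connector_of; auto].
    split.
    + destruct (Req_dec E E1) as [->|]; [contradiction| lra].
    + destruct (Req_dec E E2) as [->|]; [contradiction| lra].
Qed.
End Main.

Theorem corollary2 (a gam lam E1 E2 : R) :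
  0 < a < 1 / 2 ->
  - sqrt (2 * a * (1 - 2 * a)) < gam < 0 ->
  lam <= -1 + a ->
  0 <= E1 -> E1 < E2 -> E2 < 1 ->
  corridor a gam lam E1 0%Z ->
  (exists k : Z, (1 <= k)%Z /\ corridor a gam lam E2 k) ->
  exists E : R, E1 < E < E2 /\ saddles_connector a gam lam E.
Proof.
  intros [Ha _] _ _ HE1 HE12 HE2 Hc1 Hc2.
  exact (main_thm a gam lam E1 E2 Ha HE1 HE12 HE2 Hc1 Hc2).
Qed.
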